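(* Let $n\ge1$, $\gamma>0$, and let $g_i,f_j:[0,1]\to[0,\infty)$, $i,j=1,\dots,n$, be $\mathcal C^1$ functions. Consider the system $$\dot{x}_i = -x_i g_i(x_i)\sum_{j=1}^n f_j(y_j)y_j,\qquad \dot{y}_i = x_i g_i(x_i)\sum_{j=1}^n f_j(y_j)y_j-\gamma y_i,\qquad i=1,\dots,n,$$ with initial condition $(x(0),y(0))\in\mathcal S=\{(x,y)\in[0,1]^{2n}:x+y\le\mathbf 1\}$ satisfying $\mathbf 0\lneq x(0)\le\mathbf 1-y(0)\lneq\mathbf 1$. Assume that $g(x)>\mathbf 0$ and $f(y)>\mathbf 0$ for all $(x,y)\in\mathcal S$, that $x_i\mapsto x_ig_i(x_i)$ is increasing for every $i$, and that $y_j\mapsto f_j(y_j)y_j$ is increasing and concave for every $j$. Let $\bar y(t)=\sum_{j=1}^n f_j(y_j(t))\,y_j(t)$. Then: (i) if $\dot{\bar y}(0)\le 0$, then $\bar y(t)$ is strictly decreasing for $t\ge0$; (ii) if $\dot{\bar y}(0)>0$, then there exists $\hat t>0$ such that $\bar y(t)$ is strictly increasing on $[0,\hat t]$ and strictly decreasing on $[\hat t,+\infty)$.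
   Context: Vector inequalities are entrywise: $u\le v$ means $u_i\le v_i$ for all $i$, $u<v$ means $u_i<v_i$ for all $i$, and $u\lneq v$ means $u\le v$ with $u_j<v_j$ for some $j$. $g(x)$ denotes the vector $(g_1(x_1),\dots,g_n(x_n))$ and $f(y)$ the vector $(f_1(y_1),\dots,f_n(y_n))$. The system is the network SIR model with rank-one interaction matrix $A_{ij}(x,y)=g_i(x_i)f_j(y_j)$. *)

(* Defs.v *)
From HB Require Import structures.
From mathcomp Require Import all_boot all_order all_algebra.
From mathcomp Require Import all_classical all_reals all_analysis.
Set Implicit Arguments. Unset Strict Implicit. Unset Printing Implicit Defensive.
Import Order.TTheory GRing.Theory Num.Theory.
Import numFieldNormedType.Exports.
Local Open Scope classical_set_scope.
Local Open Scope ring_scope.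

(* At interior points this is the usual derivative; at an endpoint of an
   interval it is the one-sided derivative. *)
Definition deriv_within {R : realType} (A : set R) (u : R -> R) (t d : R) : Prop :=
  (fun h : R => (u (t + h) - u t) / h) @ within (fun h : R => A (t + h)) (0 : R)^'
    --> d.

Definition I01 {R : realType} : set R := [set z | 0 <= z <= 1].
Definition Rplus_half {R : realType} : set R := [set z | 0 <= z].

Definition C1_on01 {R : realType} (u : R -> R) : Prop :=
  exists du : R -> R, {within I01, continuous du} /\
    forall z, I01 z -> deriv_within I01 u z (du z).

Definition inS {R : realType} (n : nat) (x y : 'I_n -> R) : Prop :=
  forall i, [/\ 0 <= x i <= 1, 0 <= y i <= 1 & x i + y i <= 1].

Definition vle {R : realType} (n : nat) (u v : 'I_n -> R) : Prop :=
  forall i, u i <= v i.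
Definition vlne {R : realType} (n : nat) (u v : 'I_n -> R) : Prop :=
  vle u v /\ exists j, u j < v j.

Definition strictly_incr_on01 {R : realType} (h : R -> R) : Prop :=
  forall a b, I01 a -> I01 b -> a < b -> h a < h b.
Definition concave_on01 {R : realType} (h : R -> R) : Prop :=
  forall a b l, I01 a -> I01 b -> 0 <= l <= 1 ->
    l * h a + (1 - l) * h b <= h (l * a + (1 - l) * b).

Definition ybar {R : realType} (n : nat) (f : 'I_n -> R -> R)
  (y : 'I_n -> R -> R) (t : R) : R :=
  \sum_(j < n) f j (y j t) * y j t.

(* Main.v *)
Require Import Defs.
From HB Require Import structures.
From mathcomp Require Import all_boot all_order all_algebra.
From mathcomp Require Import all_classical all_reals all_analysis.
From mathcomp Require Import ring lra.
Import Order.TTheory GRing.Theory Num.Theory.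
Import numFieldNormedType.Exports.
Local Open Scope classical_set_scope.
Local Open Scope ring_scope.

Module Aux.
Set Implicit Arguments. Unset Strict Implicit. Unset Printing Implicit Defensive.

Section Calc.
Variable R : realType.
Implicit Types (A B : set R) (t : R) (phi psi : R -> R).

Definition lo A t phi := forall e : R, 0 < e -> exists2 d : R, 0 < d &
  forall s, A s -> `|s - t| < d -> `|phi s| <= e * `|s - t|.
Definition loU A t phi := forall e : R, 0 < e -> exists2 d : R, 0 < d &
  forall s, A s -> `|s - t| < d -> phi s <= e * `|s - t|.
Definition lz A t phi := forall e : R, 0 < e -> exists2 d : R, 0 < d &
  forall s, A s -> `|s - t| < d -> `|phi s| <= e.
Definition lO A t phi := exists C : R, exists2 d : R, 0 < d &
  forall s, A s -> `|s - t| < d -> `|phi s| <= C * `|s - t|.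
Definition lb A t phi := exists C : R, exists2 d : R, 0 < d &
  forall s, A s -> `|s - t| < d -> `|phi s| <= C.

Lemma minpos (a b : R) : 0 < a -> 0 < b -> 0 < Num.min a b.
Proof. by move=> a0 b0; rewrite lt_min a0 b0. Qed.
Lemma ltminl {x a b : R} : x < Num.min a b -> x < a.
Proof. by rewrite lt_min => /andP[]. Qed.
Lemma ltminr {x a b : R} : x < Num.min a b -> x < b.
Proof. by rewrite lt_min => /andP[]. Qed.

Lemma lo_ext A t phi psi : (forall s, A s -> phi s = psi s) -> lo A t phi -> lo A t psi.
Proof.
move=> E H e e0; have [d d0 Hd] := H e e0; exists d => // s As st.
by rewrite -E //; apply: Hd.
Qed.
Lemma lz_ext A t phi psi : (forall s, A s -> phi s = psi s) -> lz A t phi -> lz A t psi.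
Proof.
move=> E H e e0; have [d d0 Hd] := H e e0; exists d => // s As st.
by rewrite -E //; apply: Hd.
Qed.
Lemma lo_sub A B t phi : (forall s, B s -> A s) -> lo A t phi -> lo B t phi.
Proof.
move=> E H e e0; have [d d0 Hd] := H e e0; exists d => // s As st.
by apply: Hd => //; apply: E.
Qed.
Lemma loU_sub A B t phi : (forall s, B s -> A s) -> loU A t phi -> loU B t phi.
Proof.
move=> E H e e0; have [d d0 Hd] := H e e0; exists d => // s As st.
by apply: Hd => //; apply: E.
Qed.
Lemma lz_sub A B t phi : (forall s, B s -> A s) -> lz A t phi -> lz B t phi.
Proof.
move=> E H e e0; have [d d0 Hd] := H e e0; exists d => // s As st.
by apply: Hd => //; apply: E.
Qed.

Lemma lo0 A t : lo A t (fun _ => 0).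
Proof.
move=> e e0; exists 1 => // s _ _; rewrite normr0; apply: mulr_ge0 => //.
exact: ltW.
Qed.
Lemma lz0 A t : lz A t (fun _ => 0).
Proof. move=> e e0; exists 1 => // s _ _; rewrite normr0; exact: ltW. Qed.
Lemma loU0 A t : loU A t (fun _ => 0).
Proof. move=> e e0; exists 1 => // s _ _; apply: mulr_ge0 => //; exact: ltW. Qed.

Lemma lo_add A t phi psi : lo A t phi -> lo A t psi -> lo A t (fun s => phi s + psi s).
Proof.
move=> H1 H2 e e0.
have e20 : 0 < e / 2 by rewrite divr_gt0.
have [d1 d10 H1'] := H1 _ e20; have [d2 d20 H2'] := H2 _ e20.
exists (Num.min d1 d2); first exact: minpos.
move=> s As st.
have := H1' s As (ltminl st); have := H2' s As (ltminr st).
have := ler_normD (phi s) (psi s).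
move: (`|phi s|) (`|psi s|) (`|phi s + psi s|) (`|s - t|) => a b c u; lra.
Qed.
Lemma loU_add A t phi psi : loU A t phi -> loU A t psi -> loU A t (fun s => phi s + psi s).
Proof.
move=> H1 H2 e e0.
have e20 : 0 < e / 2 by rewrite divr_gt0.
have [d1 d10 H1'] := H1 _ e20; have [d2 d20 H2'] := H2 _ e20.
exists (Num.min d1 d2); first exact: minpos.
move=> s As st.
have := H1' s As (ltminl st); have := H2' s As (ltminr st).
move: (phi s) (psi s) (`|s - t|) => a b u; lra.
Qed.
Lemma lz_add A t phi psi : lz A t phi -> lz A t psi -> lz A t (fun s => phi s + psi s).
Proof.
move=> H1 H2 e e0.
have e20 : 0 < e / 2 by rewrite divr_gt0.
have [d1 d10 H1'] := H1 _ e20; have [d2 d20 H2'] := H2 _ e20.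
exists (Num.min d1 d2); first exact: minpos.
move=> s As st.
have := H1' s As (ltminl st); have := H2' s As (ltminr st).
have := ler_normD (phi s) (psi s).
move: (`|phi s|) (`|psi s|) (`|phi s + psi s|) => a b c; lra.
Qed.

Lemma loU_of_lo A t phi : lo A t phi -> loU A t phi.
Proof.
move=> H e e0; have [d d0 Hd] := H e e0; exists d => // s As st.
exact: le_trans (ler_norm _) (Hd s As st).
Qed.

Lemma loU_le A t phi psi : (exists2 d0 : R, 0 < d0 & forall s, A s -> `|s - t| < d0 -> phi s <= psi s) ->
  loU A t psi -> loU A t phi.
Proof.
move=> [d0 d00 Hle] H e e0; have [d d0' Hd] := H e e0.
exists (Num.min d0 d); first exact: minpos.
move=> s As st; apply: le_trans (Hle s As (ltminl st)) (Hd s As (ltminr st)).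
Qed.

Lemma lo_scale A t c phi : lo A t phi -> lo A t (fun s => c * phi s).
Proof.
move=> H e e0.
have c1 : 0 < `|c| + 1 by rewrite ltr_wpDl.
have [d d0 Hd] := H (e / (`|c| + 1)) (divr_gt0 e0 c1).
exists d => // s As st; rewrite normrM.
have H1 := Hd s As st.
have qK : e / (`|c| + 1) * (`|c| + 1) = e by rewrite divfK // gt_eqF.
have q0 : 0 < e / (`|c| + 1) by rewrite divr_gt0.
move: (e / (`|c| + 1)) qK q0 H1 => q qK q0 H1.
have h0 : 0 <= `|phi s| by [].
have h1 : 0 <= `|c| by [].
have h2 : 0 <= `|s - t| by [].
nra.
Qed.

Lemma lz_scale A t c phi : lz A t phi -> lz A t (fun s => c * phi s).
Proof.
move=> H e e0.
have c1 : 0 < `|c| + 1 by rewrite ltr_wpDl.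
have [d d0 Hd] := H (e / (`|c| + 1)) (divr_gt0 e0 c1).
exists d => // s As st; rewrite normrM.
have H1 := Hd s As st.
have qK : e / (`|c| + 1) * (`|c| + 1) = e by rewrite divfK // gt_eqF.
have q0 : 0 < e / (`|c| + 1) by rewrite divr_gt0.
move: (e / (`|c| + 1)) qK q0 H1 => q qK q0 H1.
have h0 : 0 <= `|phi s| by [].
have h1 : 0 <= `|c| by [].
nra.
Qed.

Lemma lo_opp A t phi : lo A t phi -> lo A t (fun s => - phi s).
Proof.
move=> H; apply: lo_ext (lo_scale (-1) H) => s _; by rewrite mulN1r.
Qed.
Lemma lz_opp A t phi : lz A t phi -> lz A t (fun s => - phi s).
Proof.
move=> H; apply: lz_ext (lz_scale (-1) H) => s _; by rewrite mulN1r.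
Qed.

Lemma lO_of_lo A t phi : lo A t phi -> lO A t phi.
Proof. by move=> /(_ 1 ltr01) [d d0 Hd]; exists 1, d. Qed.

Lemma lO_lin A t c : lO A t (fun s => c * (s - t)).
Proof. by exists `|c|, 1 => // s _ _; rewrite normrM. Qed.

Lemma lz_of_lO A t phi : lO A t phi -> lz A t phi.
Proof.
move=> [C [d d0 Hd]] e e0.
have c1 : 0 < `|C| + 1 by rewrite ltr_wpDl.
exists (Num.min d (e / (`|C| + 1))); first by apply: minpos => //; rewrite divr_gt0.
move=> s As st.
have H1 := Hd s As (ltminl st).
have H2 := ltminr st.
rewrite ltr_pdivlMr // in H2.
have h0 : 0 <= `|s - t| by [].
have h1 : C <= `|C| by apply: ler_norm.
nra.
Qed.

Lemma lz_of_lo A t phi : lo A t phi -> lz A t phi.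
Proof. by move=> H; apply: lz_of_lO; apply: lO_of_lo. Qed.

Lemma lb_of_lz A t phi : lz A t phi -> lb A t phi.
Proof. by move=> /(_ 1 ltr01) [d d0 Hd]; exists 1, d. Qed.

Lemma lb_const A t c : lb A t (fun _ => c).
Proof. by exists `|c|, 1. Qed.

Lemma lb_add A t phi psi : lb A t phi -> lb A t psi -> lb A t (fun s => phi s + psi s).
Proof.
move=> [C1 [d1 d10 H1]] [C2 [d2 d20 H2]]; exists (C1 + C2), (Num.min d1 d2).
  exact: minpos.
move=> s As st; have := H1 s As (ltminl st); have := H2 s As (ltminr st).
have := ler_normD (phi s) (psi s).
move: (`|phi s|) (`|psi s|) (`|phi s + psi s|) => a b c; lra.
Qed.

Lemma lb_near A t phi : lz A t (fun s => phi s - phi t) -> lb A t phi.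
Proof.
move=> H; have [C [d d0 Hd]] := lb_add (lb_const A t (phi t)) (lb_of_lz H).
exists C, d => // s As st; have := Hd s As st; by rewrite addrC subrK.
Qed.

Lemma lo_mulb A t psi phi : lb A t psi -> lo A t phi -> lo A t (fun s => psi s * phi s).
Proof.
move=> [C [d1 d10 H1]] H e e0.
have c1 : 0 < `|C| + 1 by rewrite ltr_wpDl.
have [d d0 Hd] := H (e / (`|C| + 1)) (divr_gt0 e0 c1).
exists (Num.min d1 d); first exact: minpos.
move=> s As st; rewrite normrM.
have H2 := Hd s As (ltminr st).
have qK : e / (`|C| + 1) * (`|C| + 1) = e by rewrite divfK // gt_eqF.
have q0 : 0 < e / (`|C| + 1) by rewrite divr_gt0.
move: (e / (`|C| + 1)) qK q0 H2 => q qK q0 H2.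
have := H1 s As (ltminl st) => H3.
have h0 : 0 <= `|phi s| by [].
have h1 : C <= `|C| by apply: ler_norm.
have h2 : 0 <= e * `|s - t| by apply: mulr_ge0 => //; apply: ltW.
have h3 : 0 <= `|psi s| by [].
nra.
Qed.

Lemma lz_mulb A t psi phi : lb A t psi -> lz A t phi -> lz A t (fun s => psi s * phi s).
Proof.
move=> [C [d1 d10 H1]] H e e0.
have c1 : 0 < `|C| + 1 by rewrite ltr_wpDl.
have [d d0 Hd] := H (e / (`|C| + 1)) (divr_gt0 e0 c1).
exists (Num.min d1 d); first exact: minpos.
move=> s As st; rewrite normrM.
have H2 := Hd s As (ltminr st).
have qK : e / (`|C| + 1) * (`|C| + 1) = e by rewrite divfK // gt_eqF.
have q0 : 0 < e / (`|C| + 1) by rewrite divr_gt0.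
move: (e / (`|C| + 1)) qK q0 H2 => q qK q0 H2.
have := H1 s As (ltminl st) => H3.
have h0 : 0 <= `|phi s| by [].
have h1 : C <= `|C| by apply: ler_norm.
have h3 : 0 <= `|psi s| by [].
nra.
Qed.

Lemma lo_zO A t psi phi : lz A t psi -> lO A t phi -> lo A t (fun s => psi s * phi s).
Proof.
move=> H [C [d1 d10 H1]] e e0.
have c1 : 0 < `|C| + 1 by rewrite ltr_wpDl.
have [d d0 Hd] := H (e / (`|C| + 1)) (divr_gt0 e0 c1).
exists (Num.min d1 d); first exact: minpos.
move=> s As st; rewrite normrM.
have H2 := Hd s As (ltminr st).
have qK : e / (`|C| + 1) * (`|C| + 1) = e by rewrite divfK // gt_eqF.
have q0 : 0 < e / (`|C| + 1) by rewrite divr_gt0.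
move: (e / (`|C| + 1)) qK q0 H2 => q qK q0 H2.
have := H1 s As (ltminl st) => H3.
have h0 : 0 <= `|phi s| by [].
have h1 : C <= `|C| by apply: ler_norm.
have h3 : 0 <= `|psi s| by [].
have h4 : 0 <= `|s - t| by [].
have H3' : `|phi s| <= (`|C| + 1) * `|s - t| by nra.
apply: le_trans (ler_pM h3 h0 H2 H3') _.
by rewrite mulrA qK.
Qed.

Lemma lo_sum (I : Type) (r : seq I) A t (phi : I -> R -> R) :
  (forall j, lo A t (phi j)) -> lo A t (fun s => \sum_(j <- r) phi j s).
Proof.
move=> H; elim: r => [|j r IH].
  by apply: lo_ext (lo0 A t) => s _; rewrite big_nil.
by apply: lo_ext (lo_add (H j) IH) => s _; rewrite big_cons.
Qed.
Lemma lz_sum (I : Type) (r : seq I) A t (phi : I -> R -> R) :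
  (forall j, lz A t (phi j)) -> lz A t (fun s => \sum_(j <- r) phi j s).
Proof.
move=> H; elim: r => [|j r IH].
  by apply: lz_ext (lz0 A t) => s _; rewrite big_nil.
by apply: lz_ext (lz_add (H j) IH) => s _; rewrite big_cons.
Qed.
Lemma loU_ext A t phi psi : (forall s, A s -> phi s = psi s) -> loU A t phi -> loU A t psi.
Proof.
move=> E H e e0; have [d d0 Hd] := H e e0; exists d => // s As st.
by rewrite -E //; apply: Hd.
Qed.
Lemma loU_sum (I : Type) (r : seq I) A t (phi : I -> R -> R) :
  (forall j, loU A t (phi j)) -> loU A t (fun s => \sum_(j <- r) phi j s).
Proof.
move=> H; elim: r => [|j r IH].
  by apply: loU_ext (loU0 A t) => s _; rewrite big_nil.
by apply: loU_ext (loU_add (H j) IH) => s _; rewrite big_cons.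
Qed.

Lemma lz_comp A B t (F : R -> R) phi :
  (forall s, A s -> B (F s)) -> lz A t (fun s => F s - F t) -> lz B (F t) phi ->
  lz A t (fun s => phi (F s)).
Proof.
move=> AB HF Hp e e0.
have [d1 d10 H1] := Hp e e0.
have [d2 d20 H2] := HF (d1 / 2) (divr_gt0 d10 (ltr0Sn _ 1)).
exists d2 => // s As st; apply: H1; first exact: AB.
have := H2 s As st; lra.
Qed.

Lemma lo_comp A B t (F : R -> R) phi :
  (forall s, A s -> B (F s)) -> lO A t (fun s => F s - F t) -> lo B (F t) phi ->
  lo A t (fun s => phi (F s)).
Proof.
move=> AB HF Hp e e0.
have HFz := lz_of_lO HF.
case: HF => [C [d3 d30 H3]].
have c1 : 0 < `|C| + 1 by rewrite ltr_wpDl.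
have [d1 d10 H1] := Hp (e / (`|C| + 1)) (divr_gt0 e0 c1).
have [d2 d20 H2] := HFz (d1 / 2) (divr_gt0 d10 (ltr0Sn _ 1)).
exists (Num.min d2 d3); first exact: minpos.
move=> s As st.
have H4 := H3 s As (ltminr st).
have H5 : `|F s - F t| < d1 by have := H2 s As (ltminl st); lra.
have H6 := H1 (F s) (AB s As) H5.
have qK : e / (`|C| + 1) * (`|C| + 1) = e by rewrite divfK // gt_eqF.
have q0 : 0 < e / (`|C| + 1) by rewrite divr_gt0.
move: (e / (`|C| + 1)) qK q0 H6 => q qK q0 H6.
have h1 : C <= `|C| by apply: ler_norm.
have h4 : 0 <= `|s - t| by [].
have h5 : 0 <= e by apply: ltW.
have h6 : 0 <= `|phi (F s)| by [].
have h7 : 0 <= `|F s - F t| by [].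
have H4' : `|F s - F t| <= (`|C| + 1) * `|s - t| by nra.
apply: le_trans H6 _; rewrite -qK -mulrA; apply: ler_wpM2l; [exact: ltW|exact: H4'].
Qed.


Definition Dw A F t (d : R) := lo A t (fun s => F s - F t - d * (s - t)).
Definition Cw A F t := lz A t (fun s => F s - F t).

Lemma lO_of_Dw A F t d : Dw A F t d -> lO A t (fun s => F s - F t).
Proof.
move=> /lO_of_lo [C [d0 d00 H]]; exists (C + `|d|), d0 => // s As st.
have := H s As st; have := ler_normD (F s - F t - d * (s - t)) (d * (s - t)).
rewrite subrK normrM.
move: (`|F s - F t - d * (s - t)|) (`|F s - F t|) (`|s - t|) (`|d|) => a b c u; nra.
Qed.

Lemma Cw_of_Dw A F t d : Dw A F t d -> Cw A F t.
Proof. by move=> H; apply: lz_of_lO; apply: lO_of_Dw H. Qed.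

Lemma Dw_ext A F G t d : (forall s, F s = G s) -> Dw A F t d -> Dw A G t d.
Proof. by move=> E; apply: lo_ext => s _; rewrite !E. Qed.
Lemma Cw_ext A F G t : (forall s, F s = G s) -> Cw A F t -> Cw A G t.
Proof. by move=> E; apply: lz_ext => s _; rewrite !E. Qed.
Lemma Dw_sub A B F t d : (forall s, B s -> A s) -> Dw A F t d -> Dw B F t d.
Proof. exact: lo_sub. Qed.
Lemma Cw_sub A B F t : (forall s, B s -> A s) -> Cw A F t -> Cw B F t.
Proof. exact: lz_sub. Qed.

Lemma Dw_const A t c : Dw A (fun _ => c) t 0.
Proof. by apply: lo_ext (lo0 A t) => s _; rewrite subrr mul0r subr0. Qed.
Lemma Cw_const A t c : Cw A (fun _ => c) t.
Proof. by apply: lz_ext (lz0 A t) => s _; rewrite subrr. Qed.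
Lemma Dw_id A t : Dw A id t 1.
Proof. by apply: lo_ext (lo0 A t) => s _; rewrite mul1r subrr. Qed.
Lemma Cw_id A t : Cw A id t.
Proof. exact: Cw_of_Dw (Dw_id A t). Qed.

Lemma Dw_add A F G t a b : Dw A F t a -> Dw A G t b ->
  Dw A (fun s => F s + G s) t (a + b).
Proof.
move=> H1 H2; apply: lo_ext (lo_add H1 H2) => s _; rewrite mulrDl; lra.
Qed.
Lemma Cw_add A F G t : Cw A F t -> Cw A G t -> Cw A (fun s => F s + G s) t.
Proof. by move=> H1 H2; apply: lz_ext (lz_add H1 H2) => s _; lra. Qed.

Lemma Dw_scale A F t a c : Dw A F t a -> Dw A (fun s => c * F s) t (c * a).
Proof. by move=> H; apply: lo_ext (lo_scale c H) => s _; rewrite -mulrA; lra. Qed.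
Lemma Cw_scale A F t c : Cw A F t -> Cw A (fun s => c * F s) t.
Proof. by move=> H; apply: lz_ext (lz_scale c H) => s _; lra. Qed.

Lemma Dw_mul A F G t a b : Dw A F t a -> Dw A G t b ->
  Dw A (fun s => F s * G s) t (a * G t + F t * b).
Proof.
move=> HF HG.
have GC := Cw_of_Dw HG.
have L1 := lo_mulb (lb_near GC) HF.
have L2 := lo_scale (F t) HG.
have L3 := lo_zO GC (lO_lin A t a).
apply: lo_ext (lo_add (lo_add L1 L2) L3) => s _.
rewrite /=; ring.
Qed.

Lemma Cw_mul A F G t : Cw A F t -> Cw A G t -> Cw A (fun s => F s * G s) t.
Proof.
move=> HF HG.
have L1 := lz_mulb (lb_near HG) HF.
have L2 := lz_scale (F t) HG.
apply: lz_ext (lz_add L1 L2) => s _ /=; ring.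
Qed.

Lemma Dw_comp A B F G t a g : (forall s, A s -> B (F s)) ->
  Dw A F t a -> Dw B G (F t) g -> Dw A (fun s => G (F s)) t (g * a).
Proof.
move=> AB HF HG.
have L1 := lo_comp AB (lO_of_Dw HF) HG.
have L2 := lo_scale g HF.
apply: lo_ext (lo_add L1 L2) => s _ /=; ring.
Qed.

Lemma Cw_comp A B F G t : (forall s, A s -> B (F s)) ->
  Cw A F t -> Cw B G (F t) -> Cw A (fun s => G (F s)) t.
Proof.
move=> AB HF HG.
have L1 := lz_comp AB HF HG.
apply: lz_ext L1 => s _ //.
Qed.

Lemma Dw_sum (I : Type) (r : seq I) A t (F : I -> R -> R) (d : I -> R) :
  (forall j, Dw A (F j) t (d j)) ->
  Dw A (fun s => \sum_(j <- r) F j s) t (\sum_(j <- r) d j).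
Proof.
move=> H; elim: r => [|j r IH].
  by apply: lo_ext (lo0 A t) => s _; rewrite !big_nil; lra.
apply: lo_ext (lo_add (H j) IH) => s _; rewrite !big_cons; lra.
Qed.

Lemma Cw_sum (I : Type) (r : seq I) A t (F : I -> R -> R) :
  (forall j, Cw A (F j) t) -> Cw A (fun s => \sum_(j <- r) F j s) t.
Proof.
move=> H; elim: r => [|j r IH].
  by apply: lz_ext (lz0 A t) => s _; rewrite !big_nil; lra.
apply: lz_ext (lz_add (H j) IH) => s _; rewrite !big_cons; lra.
Qed.

Lemma exp_bound (u : R) : `|u| <= 1 / 2 -> 0 <= expR u - 1 - u <= 2 * u ^+ 2.
Proof.
move=> hu.
have E1 := expR_ge1Dx u.
have E2 := expR_ge1Dx (- u); rewrite expRN in E2.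
have X0 := expR_gt0 u.
have E3 : (1 - u) * expR u <= 1.
  have : (1 - u) <= (expR u)^-1 by move: E2; rewrite -[1 - u]/(1 + - u).
  by move=> H; have := ler_wpM2r (ltW X0) H; rewrite mulVf ?gt_eqF.
move: hu; rewrite ler_norml => /andP [hu1 hu2].
move: (expR u) X0 E1 E3 => X X0 E1 E3.
apply/andP; split; first lra.
nra.
Qed.

Lemma Dw_exp A t c : Dw A (fun s => expR (c * s)) t (c * expR (c * t)).
Proof.
move=> e e0.
have c1 : 0 < 2 * `|c| ^+ 2 + 1 by rewrite ltr_wpDl // mulr_ge0 // exprn_ge0.
have K0 : 0 < expR (c * t) by apply: expR_gt0.
set q := e / (expR (c * t) * (2 * `|c| ^+ 2 + 1)).
have q0 : 0 < q by rewrite divr_gt0 // mulr_gt0.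
have cc : 0 < `|c| + 1 by rewrite ltr_wpDl.
exists (Num.min q (1 / (2 * (`|c| + 1)))).
  by apply: minpos => //; rewrite divr_gt0 // mulr_gt0.
move=> s _ st.
have st1 := ltminl st; have st2 := ltminr st.
have hu : `|c * (s - t)| <= 1 / 2.
  rewrite normrM.
  have : `|s - t| * (2 * (`|c| + 1)) < 1.
    by move: st2; rewrite ltr_pdivlMr // mulr_gt0.
  have : 0 <= `|c| by []; have : 0 <= `|s - t| by [].
  move: (`|c|) (`|s - t|) => a b; nra.
have [B1 B2] := andP (exp_bound hu).
have -> : expR (c * s) - expR (c * t) - c * expR (c * t) * (s - t) =
  expR (c * t) * (expR (c * (s - t)) - 1 - c * (s - t)).
  have -> : expR (c * s) = expR (c * t) * expR (c * (s - t)).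
    by rewrite -expRD; congr expR; ring.
  ring.
rewrite normrM (gtr0_norm K0) (ger0_norm B1).
have B3 : 2 * (c * (s - t)) ^+ 2 <= 2 * `|c| ^+ 2 * `|s - t| * `|s - t|.
  by rewrite exprMn -[(s - t) ^+ 2]real_normK ?num_real // -[c ^+ 2]real_normK ?num_real //; lra.
have qK : q * (expR (c * t) * (2 * `|c| ^+ 2 + 1)) = e by rewrite /q divfK // gt_eqF // mulr_gt0.
clear st; move: q qK q0 st1 => q qK q0 st1.
have h0 : 0 <= `|s - t| by [].
have h1 : 0 <= 2 * `|c| ^+ 2 by rewrite mulr_ge0 // exprn_ge0.
move: (expR (c * (s - t)) - 1 - c * (s - t)) B1 B2 B3 => Z B1 B2 B3.
move: (2 * `|c| ^+ 2) h1 qK B3 => M h1 qK B3.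
move: (expR (c * t)) K0 qK => X K0 qK.
move: (`|s - t|) h0 st1 B3 => u h0 st1 B3.
have Z1 : Z <= M * u * u by lra.
have Z2 : M * u * u <= (M + 1) * q * u.
  have : M * u <= (M + 1) * q by nra.
  by move=> H; apply: ler_wpM2r.
have Z3 : X * Z <= X * ((M + 1) * q * u) by apply: ler_wpM2l; [exact: ltW|lra].
suff -> : e * u = X * ((M + 1) * q * u) by [].
rewrite -qK; ring.
Qed.

Lemma GM (a b : R) F : a < b ->
  (forall tau, a <= tau <= b -> Cw (fun s => a <= s <= b) F tau) ->
  (forall tau, a <= tau < b -> loU (fun s => tau < s) tau (fun s => F s - F tau)) ->
  F b <= F a.
Proof.
move=> ab HC HD.
rewrite leNgt; apply/negP => Fab.
set eps := (F b - F a) / (2 * (b - a)).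
have eps0 : 0 < eps by rewrite divr_gt0 // ?subr_gt0 // mulr_gt0 // subr_gt0.
have epsK : eps * (2 * (b - a)) = F b - F a by rewrite /eps divfK // gt_eqF // mulr_gt0 // subr_gt0.
set S := [set s | a <= s <= b /\ F s - F a <= eps * (s - a)].
have Sa : S a by split; [rewrite lexx ltW | rewrite !subrr mulr0].
have hS : has_sup S.
  split; first by exists a.
  by exists b => s [/andP [_ ->]].
set c := sup S.
have ac : a <= c by apply: (sup_upper_bound hS).
have cb : c <= b.
  rewrite leNgt; apply/negP => bc.
  have bc0 : 0 < c - b by rewrite subr_gt0.
  have [s [/andP [_ sb] _] cs] := sup_adherent bc0 hS.
  rewrite -/c in cs; lra.
have Sc : F c - F a <= eps * (c - a).
  rewrite leNgt; apply/negP => H.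
  set eta := F c - F a - eps * (c - a).
  have eta0 : 0 < eta by rewrite subr_gt0.
  have acb : a <= c <= b by rewrite ac cb.
  have [d d0 Hd] := HC c acb (eta / 2) (divr_gt0 eta0 (ltr0Sn _ 1)).
  have [s [/andP [as_ sb] Fs] cs] := sup_adherent d0 hS.
  rewrite -/c in cs.
  have asb : a <= s <= b by rewrite as_ sb.
  have sc : s <= c by apply: (sup_upper_bound hS).
  have := Hd s asb.
  rewrite ltr_norml.
  have -> : (- d < s - c) && (s - c < d).
    apply/andP; split; lra.
  move=> /(_ isT); rewrite ler_norml => /andP [H1 H2].
  have : eps * (s - a) <= eps * (c - a) by apply: ler_wpM2l; [exact: ltW| lra].
  rewrite /eta in eta0 H1 H2 *; lra.
have cb' : c < b.
  rewrite lt_neqAle cb andbT; apply/negP => /eqP cbe.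
  rewrite cbe in Sc; lra.
have acb' : a <= c < b by rewrite ac cb'.
have [d d0 Hd] := HD c acb' eps eps0.
set s := c + Num.min d (b - c) / 2.
have m0 : 0 < Num.min d (b - c) by apply: minpos => //; rewrite subr_gt0.
have m1 : Num.min d (b - c) <= d by rewrite ge_min lexx.
have m2 : Num.min d (b - c) <= b - c by rewrite ge_min lexx orbT.
have cs : c < s by rewrite /s ltrDl divr_gt0.
have Hs := Hd s cs.
have : `|s - c| < d.
  rewrite /s addrC addKr ger0_norm; last by rewrite divr_ge0 // ltW.
  lra.
move=> /Hs; rewrite ger0_norm; last by rewrite subr_ge0 ltW.
move=> H.
have Ss : S s.
  split; first by apply/andP; split; rewrite /s; lra.
  lra.
have : s <= c by apply: (sup_upper_bound hS).
lra.
Qed.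

Lemma Dw_of_deriv A F t d : deriv_within A F t d -> Dw A F t d.
Proof.
move=> /cvgrPdist_le H e e0.
have H1 := H e e0.
rewrite near_withinE in H1. rewrite near_withinE in H1.
move/nbhs_ballP: H1 => [del del0 Hb].
exists del => // s As st.
have [->|sneq] := eqVneq s t.
  by rewrite !subrr mulr0 subr0 !normr0 mulr0.
have hne : s - t != 0 by rewrite subr_eq0.
have := Hb (s - t); rewrite /ball /= sub0r normrN => /(_ st) /(_ hne).
rewrite addrC subrK => /(_ As).
have -> : F s - F t - d * (s - t) = - ((d - (F s - F t) / (s - t)) * (s - t)).
  by rewrite mulrBl divfK // opprB.
by rewrite normrN normrM; move=> Hle; rewrite ler_pM2r ?normr_gt0.
Qed.

Lemma Cw_of_within A F x : {within A, continuous F} -> A x -> Cw A F x.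
Proof.
move=> H0 Ax e e0.
have H : {in A, continuous (F : subspace A -> R)}.
  by rewrite -continuous_subspace_in.
have := H x; rewrite inE => /(_ Ax).
move=> H2.
have : F @ within A (nbhs x) --> F x by rewrite (nbhs_subspace_in Ax); exact: H2.
move=> /cvgrPdist_le /(_ e e0) H1.
rewrite near_withinE in H1.
move/nbhs_ballP: H1 => [del del0 Hb].
exists del => // s As st.
have := Hb s; rewrite /ball /= distrC => /(_ st) /(_ As).
by rewrite distrC.
Qed.


Definition RH : set R := fun s => 0 <= s.

Lemma GMRH (a b : R) F : 0 <= a -> a <= b ->
  (forall tau, a <= tau <= b -> Cw RH F tau) ->
  (forall tau, a <= tau < b -> loU (fun s => tau < s) tau (fun s => F s - F tau)) ->
  F b <= F a.
Proof.
move=> a0 ab HC HD.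
have [->|ab'] := eqVneq a b; first exact: lexx.
have lab : a < b by rewrite lt_neqAle ab' ab.
apply: GM lab _ HD => tau ht; apply: Cw_sub (HC tau ht) => s /andP [hs _].
by rewrite /RH; apply: le_trans hs.
Qed.

Lemma loU_of_Dw_neg F tau d : 0 <= tau -> Dw RH F tau d -> d <= 0 ->
  loU (fun s => tau < s) tau (fun s => F s - F tau).
Proof.
move=> t0 H d0 e e0; have [del del0 Hd] := H e e0; exists del => // s ts st.
have Hs : RH s by rewrite /RH; apply: le_trans (ltW ts).
have := Hd s Hs st; rewrite ler_norml => /andP [_ H2].
have : d * (s - tau) <= 0 by rewrite mulr_le0_ge0 // subr_ge0 ltW.
lra.
Qed.

Lemma strict_local F tau d : 0 <= tau -> Dw RH F tau d -> d < 0 ->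
  exists2 del : R, 0 < del & forall s, tau < s -> s < tau + del -> F s < F tau.
Proof.
move=> t0 H d0.
have e0 : 0 < - d / 2 by rewrite divr_gt0 // oppr_gt0.
have [del del0 Hd] := H _ e0; exists del => // s ts st.
have Hs : RH s by rewrite /RH; apply: le_trans (ltW ts).
have nst : `|s - tau| = s - tau by rewrite ger0_norm // subr_ge0 ltW.
have st' : `|s - tau| < del by rewrite nst; lra.
have := Hd s Hs st'; rewrite nst ler_norml => /andP [_ H2].
have u0 : 0 < s - tau by rewrite subr_gt0.
move: (s - tau) u0 H2 => u u0 H2; nra.
Qed.

Lemma GMstrict (a b : R) F d0 : 0 <= a -> a < b ->
  (forall tau, a <= tau <= b -> Cw RH F tau) ->
  (forall tau, a <= tau < b -> loU (fun s => tau < s) tau (fun s => F s - F tau)) ->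
  Dw RH F a d0 -> d0 < 0 -> F b < F a.
Proof.
move=> a0 ab HC HD Ha d00.
have [del del0 Hl] := strict_local a0 Ha d00.
set s := a + Num.min del (b - a) / 2.
have m0 : 0 < Num.min del (b - a) by apply: minpos => //; rewrite subr_gt0.
have m1 : Num.min del (b - a) <= del by rewrite ge_min lexx.
have m2 : Num.min del (b - a) <= b - a by rewrite ge_min lexx orbT.
have as_ : a < s by rewrite /s ltrDl divr_gt0.
have sb : s <= b by rewrite /s; lra.
have Fs : F s < F a by apply: Hl => //; rewrite /s; lra.
have : F b <= F s.
  apply: GMRH => //.
  - by apply: le_trans (ltW as_).
  - by move=> tau /andP [h1 h2]; apply: HC; rewrite h2 andbT; apply: le_trans (ltW as_) h1.
  - by move=> tau /andP [h1 h2]; apply: HD; rewrite h2 andbT; apply: le_trans (ltW as_) h1.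
move=> H; exact: le_lt_trans H Fs.
Qed.

Lemma Dw_unique F tau d1 d2 : 0 <= tau -> Dw RH F tau d1 -> Dw RH F tau d2 -> d1 = d2.
Proof.
move=> t0 H1 H2; apply/eqP; rewrite -subr_eq0; apply/negP => /negP hne.
have eta0 : 0 < `|d1 - d2| / 4 by rewrite divr_gt0 // normr_gt0.
have [del1 del10 Hd1] := H1 _ eta0; have [del2 del20 Hd2] := H2 _ eta0.
set s := tau + Num.min del1 del2 / 2.
have m0 : 0 < Num.min del1 del2 by apply: minpos.
have m1 : Num.min del1 del2 <= del1 by rewrite ge_min lexx.
have m2 : Num.min del1 del2 <= del2 by rewrite ge_min lexx orbT.
have Hs : RH s by rewrite /RH /s; apply: addr_ge0 => //; rewrite divr_ge0 // ltW.
have us : s - tau = Num.min del1 del2 / 2 by rewrite /s addrC addKr.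
have nus : `|s - tau| = Num.min del1 del2 / 2 by rewrite us ger0_norm // divr_ge0 // ltW.
have A1 := Hd1 s Hs; have A2 := Hd2 s Hs.
rewrite nus in A1 A2.
have l1 : Num.min del1 del2 / 2 < del1 by lra.
have l2 : Num.min del1 del2 / 2 < del2 by lra.
have B1 := A1 l1; have B2 := A2 l2.
have : `|(d1 - d2) * (s - tau)| <= `|d1 - d2| / 4 * (Num.min del1 del2 / 2) * 2.
  have -> : (d1 - d2) * (s - tau) = (F s - F tau - d2 * (s - tau)) - (F s - F tau - d1 * (s - tau)) by ring.
  apply: le_trans (ler_normB _ _) _; lra.
rewrite normrM nus.
have : 0 < `|d1 - d2| by rewrite normr_gt0.
have q0 : 0 < Num.min del1 del2 / 2 by rewrite divr_gt0.
move: (`|d1 - d2|) (Num.min del1 del2 / 2) q0 => p q q0 p0 H.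
nra.
Qed.

Lemma loU_mulpos A t psi phi : lb A t psi -> (forall s, A s -> 0 <= psi s) -> loU A t phi ->
  loU A t (fun s => psi s * phi s).
Proof.
move=> [C [d1 d10 H1]] hpos H e e0.
have c1 : 0 < `|C| + 1 by rewrite ltr_wpDl.
have [d d0 Hd] := H (e / (`|C| + 1)) (divr_gt0 e0 c1).
exists (Num.min d1 d); first exact: minpos.
move=> s As st.
have H2 := Hd s As (ltminr st).
have qK : e / (`|C| + 1) * (`|C| + 1) = e by rewrite divfK // gt_eqF.
have q0 : 0 < e / (`|C| + 1) by rewrite divr_gt0.
move: (e / (`|C| + 1)) qK q0 H2 => q qK q0 H2.
have H3 := H1 s As (ltminl st).
have h1 : C <= `|C| by apply: ler_norm.
have h3 := hpos s As.
rewrite ger0_norm // in H3.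
have h4 : 0 <= `|s - t| by [].
have : psi s * phi s <= psi s * (q * `|s - t|) by apply: ler_wpM2l.
have : psi s * (q * `|s - t|) <= (`|C| + 1) * (q * `|s - t|).
  apply: ler_wpM2r; [by rewrite mulr_ge0 // ltW | lra].
move=> Ha Hb; apply: le_trans Hb _.
suff -> : e * `|s - t| = (`|C| + 1) * (q * `|s - t|) by [].
rewrite -qK; ring.
Qed.

Lemma lO_scale A t c phi : lO A t phi -> lO A t (fun s => c * phi s).
Proof.
move=> [C [d d0 H]]; exists (`|c| * C), d => // s As st.
rewrite normrM -mulrA; apply: ler_wpM2l => //; exact: H.
Qed.

Lemma Dw_N A F t a : Dw A F t a -> Dw A (fun s => - F s) t (- a).
Proof. by move=> H; apply: lo_ext (lo_opp H) => s _; ring. Qed.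
Lemma Cw_N A F t : Cw A F t -> Cw A (fun s => - F s) t.
Proof. by move=> H; apply: lz_ext (lz_opp H) => s _; ring. Qed.
Lemma Dw_B A F G t a b : Dw A F t a -> Dw A G t b ->
  Dw A (fun s => F s - G s) t (a - b).
Proof. by move=> H1 H2; apply: Dw_add H1 (Dw_N H2). Qed.
Lemma Cw_B A F G t : Cw A F t -> Cw A G t -> Cw A (fun s => F s - G s) t.
Proof. by move=> H1 H2; apply: Cw_add H1 (Cw_N H2). Qed.
Lemma Dw_eqd A F t a b : a = b -> Dw A F t a -> Dw A F t b.
Proof. by move=> ->. Qed.

Lemma mono_of_Dw (a b : R) F : 0 <= a -> a <= b ->
  (forall tau, a <= tau <= b -> exists2 d, Dw RH F tau d & d <= 0) -> F b <= F a.
Proof.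
move=> a0 ab H; apply: GMRH => // tau.
  by move=> /H [d Hd _]; apply: Cw_of_Dw Hd.
move=> /andP [h1 h2]; have : a <= tau <= b by rewrite h1 ltW.
move=> /H [d Hd d0]; apply: loU_of_Dw_neg Hd d0.
exact: le_trans a0 h1.
Qed.

Lemma mono_strict_of_Dw (a b : R) F d0 : 0 <= a -> a < b ->
  (forall tau, a <= tau <= b -> exists2 d, Dw RH F tau d & d <= 0) ->
  Dw RH F a d0 -> d0 < 0 -> F b < F a.
Proof.
move=> a0 ab H Ha d00; apply: (GMstrict a0 ab _ _ Ha d00) => tau.
  by move=> /H [d Hd _]; apply: Cw_of_Dw Hd.
move=> /andP [h1 h2]; have : a <= tau <= b by rewrite h1 ltW.
move=> /H [d Hd d1]; apply: loU_of_Dw_neg Hd d1.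
exact: le_trans a0 h1.
Qed.

Lemma mono_of_Dw' (a b : R) F : 0 <= a -> a <= b ->
  (forall tau, a <= tau <= b -> exists2 d, Dw RH F tau d & (tau < b -> d <= 0)) -> F b <= F a.
Proof.
move=> a0 ab H; apply: GMRH => // tau.
  by move=> /H [d Hd _]; apply: Cw_of_Dw Hd.
move=> /andP [h1 h2]; have : a <= tau <= b by rewrite h1 ltW.
move=> /H [d Hd d0]; apply: loU_of_Dw_neg Hd (d0 h2).
exact: le_trans a0 h1.
Qed.

Lemma mono_strict_of_Dw' (a b : R) F d0 : 0 <= a -> a < b ->
  (forall tau, a <= tau <= b -> exists2 d, Dw RH F tau d & (tau < b -> d <= 0)) ->
  Dw RH F a d0 -> d0 < 0 -> F b < F a.
Proof.
move=> a0 ab H Ha d00; apply: (GMstrict a0 ab _ _ Ha d00) => tau.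
  by move=> /H [d Hd _]; apply: Cw_of_Dw Hd.
move=> /andP [h1 h2]; have : a <= tau <= b by rewrite h1 ltW.
move=> /H [d Hd d1]; apply: loU_of_Dw_neg Hd (d1 h2).
exact: le_trans a0 h1.
Qed.

Lemma within_of_Cw A F : (forall z, A z -> Cw A F z) -> {within A, continuous F}.
Proof.
move=> H; rewrite continuous_subspace_in => z; rewrite inE => Az.
have K : F @ within A (nbhs z) --> F z.
  apply/cvgrPdist_le => e e0.
  have [d d0 Hd] := H z Az e e0.
  rewrite near_withinE; apply/nbhs_ballP; exists d => // s; rewrite /ball /= => zs As.
  by rewrite distrC; apply: Hd => //; rewrite distrC.
by move: K; rewrite (nbhs_subspace_in Az).
Qed.

End Calc.
Arguments RH {R}.


Section HF.
Variable R : realType.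
Variables (ff dff : R -> R).
Hypothesis Hd : forall z, I01 z -> Dw I01 ff z (dff z).
Hypothesis Hc : forall z, I01 z -> Cw I01 dff z.
Hypothesis Hinc : strictly_incr_on01 (fun z => ff z * z).
Hypothesis Hcc : concave_on01 (fun z => ff z * z).

Definition hh z := ff z * z.
Definition dhh z := dff z * z + ff z.

Lemma Dh z : I01 z -> Dw I01 hh z (dhh z).
Proof.
move=> Iz; have := Dw_mul (Hd Iz) (Dw_id I01 z).
by rewrite /dhh mulr1.
Qed.

Lemma Cf z : I01 z -> Cw I01 ff z.
Proof. by move=> Iz; apply: Cw_of_Dw (Hd Iz). Qed.

Lemma Cdh z : I01 z -> Cw I01 dhh z.
Proof.
move=> Iz; apply: Cw_add; last exact: Cf.
by apply: Cw_mul; [exact: Hc|exact: Cw_id].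
Qed.

Lemma tangent a b : I01 a -> I01 b -> hh b <= hh a + dhh a * (b - a).
Proof.
move=> Ia Ib; rewrite leNgt; apply/negP => H.
set eta := hh b - hh a - dhh a * (b - a).
have eta0 : 0 < eta by rewrite /eta; lra.
have ba : b - a != 0.
  apply/negP => /eqP E; move: H; rewrite E mulr0 addr0.
  have -> : b = a by lra.
  by rewrite ltxx.
have nba : 0 < `|b - a| by rewrite normr_gt0.
have e0 : 0 < eta / (2 * `|b - a|) by rewrite divr_gt0 // mulr_gt0.
have [del del0 Hdl] := Dh Ia e0.
set mu := Num.min 1 (del / (2 * `|b - a|)).
have mu0 : 0 < mu by apply: minpos => //; rewrite divr_gt0 // mulr_gt0.
have mu1 : mu <= 1 by rewrite ge_min lexx.
have mu2 : mu <= del / (2 * `|b - a|) by rewrite ge_min lexx orbT.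
have Hcv := Hcc Ia Ib (l := 1 - mu).
have : 0 <= 1 - mu <= 1 by apply/andP; split; lra.
move=> /Hcv; set m := (1 - mu) * a + (1 - (1 - mu)) * b => Hcm.
have Im : I01 m.
  move: Ia Ib; rewrite /I01 /m /= => /andP [a0 a1] /andP [b0 b1].
  apply/andP; split; nra.
have ma : m - a = mu * (b - a) by rewrite /m; ring.
have nma : `|m - a| = mu * `|b - a| by rewrite ma normrM ger0_norm // ltW.
have mad : `|m - a| < del.
  rewrite nma.
  have : mu * `|b - a| <= del / 2.
    have E : del / (2 * `|b - a|) * `|b - a| = del / 2 by field; rewrite gt_eqF.
    by have := ler_wpM2r (ltW nba) mu2; rewrite E.
  lra.
have := Hdl m Im mad; rewrite ler_norml => /andP [_ H2].
rewrite nma ma in H2.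
have E1 : eta / (2 * `|b - a|) * (mu * `|b - a|) = mu * eta / 2.
  by field; rewrite gt_eqF.
rewrite E1 in H2.
have E2 : mu * (hh b - hh a) = mu * eta + mu * (dhh a * (b - a)) by rewrite /eta; ring.
have E3 : dhh a * (mu * (b - a)) = mu * (dhh a * (b - a)) by ring.
rewrite E3 in H2.
have : 0 < mu * eta by rewrite mulr_gt0.
rewrite /hh in E2 H2 Hcm.
lra.
Qed.

Lemma dh_mono a b : I01 a -> I01 b -> a <= b -> dhh b <= dhh a.
Proof.
move=> Ia Ib ab.
have [->|ab'] := eqVneq a b; first exact: lexx.
have lab : 0 < b - a by rewrite subr_gt0 lt_neqAle ab' ab.
have T1 := tangent Ia Ib; have T2 := tangent Ib Ia.
move: (hh a) (hh b) (dhh a) (dhh b) T1 T2 => p q r u T1 T2.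
nra.
Qed.

Lemma h0 : hh 0 = 0.
Proof. by rewrite /hh mulr0. Qed.

Lemma I01_0 : I01 (0 : R).
Proof. by rewrite /I01 /= lexx ler01. Qed.
Lemma I01_1 : I01 (1 : R).
Proof. by rewrite /I01 /= lexx ler01. Qed.

Lemma dh_pos z : I01 z -> z < 1 -> 0 < dhh z.
Proof.
move=> Iz z1.
have T := tangent Iz I01_1.
have H := Hinc Iz I01_1 z1.
rewrite -/(hh z) -/(hh 1) in H.
have z1' : 0 < 1 - z by rewrite subr_gt0.
move: (hh z) (hh 1) (dhh z) T H => p q r T H; nra.
Qed.

Lemma dh_nonneg z : I01 z -> 0 <= dhh z.
Proof.
move=> Iz.
have [z1|z1] := ltP z 1; first exact: ltW (dh_pos Iz z1).
have z1e : z = 1 by move: Iz; rewrite /I01 /= => /andP [_ h]; lra.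
rewrite z1e; rewrite leNgt; apply/negP => dn.
have e0 : 0 < - dhh 1 / 2 by rewrite divr_gt0 // oppr_gt0.
have [del del0 Hdl] := Dh I01_1 e0.
set s := 1 - Num.min del 1 / 2.
have m0 : 0 < Num.min del 1 by apply: minpos.
have m1 : Num.min del 1 <= del by rewrite ge_min lexx.
have m2 : Num.min del 1 <= 1 by rewrite ge_min lexx orbT.
have Is : I01 s by rewrite /I01 /s /=; apply/andP; split; lra.
have s1 : s < 1 by rewrite /s; lra.
have ns : `|s - 1| = Num.min del 1 / 2 by rewrite /s addrC addKr normrN ger0_norm // divr_ge0 // ltW.
have := Hdl s Is; rewrite ns => /(_ ltac:(lra)).
rewrite ler_norml => /andP [H1 _].
have E : dhh 1 * (s - 1) = - dhh 1 * (Num.min del 1 / 2) by rewrite /s; ring.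
rewrite E in H1.
have H := Hinc Is I01_1 s1; rewrite -/(hh s) -/(hh 1) in H.
have q0 : 0 < - dhh 1 * (Num.min del 1 / 2) by rewrite mulr_gt0 // ?oppr_gt0 // divr_gt0.
have pq : - dhh 1 / 2 * (Num.min del 1 / 2) = (- dhh 1 * (Num.min del 1 / 2)) / 2 by ring.
rewrite pq in H1.
set q := - dhh 1 * (Num.min del 1 / 2) in H1 q0.
lra.
Qed.

Lemma h_le_lin z : I01 z -> hh z <= dhh 0 * z.
Proof. by move=> Iz; have := tangent I01_0 Iz; rewrite h0 add0r subr0. Qed.

Lemma h_pos z : I01 z -> 0 < z -> 0 < hh z.
Proof. by move=> Iz z0; have := Hinc I01_0 Iz z0; rewrite -/(hh 0) -/(hh z) h0. Qed.

Lemma h_nonneg z : I01 z -> 0 <= hh z.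
Proof.
move=> Iz; have [z0|z0] := ltP 0 z; first exact: ltW (h_pos Iz z0).
have -> : z = 0 by move: Iz; rewrite /I01 /= => /andP [h _]; lra.
by rewrite h0.
Qed.

End HF.


Section Sol.
Variables (R : realType) (n : nat) (gam : R) (g f df : 'I_n -> R -> R) (x y : 'I_n -> R -> R).
Hypothesis gam0 : 0 < gam.
Hypothesis Hdf : forall j z, I01 z -> Dw I01 (f j) z (df j z).
Hypothesis Hdfc : forall j z, I01 z -> Cw I01 (df j) z.
Hypothesis Hgc : forall i z, I01 z -> Cw I01 (g i) z.
Hypothesis Hgpos : forall i z, I01 z -> 0 < g i z.
Hypothesis Hk : forall i, strictly_incr_on01 (fun z => z * g i z).
Hypothesis Hinc : forall j, strictly_incr_on01 (fun z => f j z * z).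
Hypothesis Hcc : forall j, concave_on01 (fun z => f j z * z).
Hypothesis Hr : forall i t, 0 <= t -> I01 (x i t) /\ I01 (y i t).
Hypothesis Hx : forall i t, 0 <= t -> Dw RH (x i) t (- (x i t * g i (x i t) * ybar f y t)).
Hypothesis Hy : forall i t, 0 <= t ->
  Dw RH (y i) t (x i t * g i (x i t) * ybar f y t - gam * y i t).
Hypothesis Hs0 : forall i, x i 0 + y i 0 <= 1.
Variables (j0 j1 : 'I_n).
Hypothesis Hj0 : 0 < x j0 0.
Hypothesis Hj1 : 0 < y j1 0.
Variable Gb : R.
Hypothesis HGb : forall i z, I01 z -> g i z <= Gb.

Definition U t := ybar f y t.
Definition kx i t := x i t * g i (x i t).
Definition a j t := dhh (f j) (df j) (y j t).
Definition yp j t := kx j t * U t - gam * y j t.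
Definition w t := \sum_(j < n) a j t * yp j t.
Definition P t := \sum_(j < n) a j t * kx j t.
Definition Um := \sum_(j < n) hh (f j) 1.
Definition Pm := \sum_(j < n) dhh (f j) (df j) 0 * (1 * g j 1).

Lemma xr i t : 0 <= t -> I01 (x i t). Proof. by move=> /(Hr i) []. Qed.
Lemma yr i t : 0 <= t -> I01 (y i t). Proof. by move=> /(Hr i) []. Qed.
Lemma RHI i : forall s, RH s -> I01 (y i s). Proof. by move=> s; apply: yr. Qed.
Lemma RHIx i : forall s, RH s -> I01 (x i s). Proof. by move=> s; apply: xr. Qed.

Lemma I01_ge0 (z : R) : I01 z -> 0 <= z. Proof. by rewrite /I01 /= => /andP []. Qed.
Lemma I01_le1 (z : R) : I01 z -> z <= 1. Proof. by rewrite /I01 /= => /andP []. Qed.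

Lemma DU t : 0 <= t -> Dw RH U t (w t).
Proof.
move=> t0; rewrite /U /ybar /w.
apply: (Dw_sum _ (F := fun j s => hh (f j) (y j s))) => j.
apply: (Dw_eqd (a := dhh (f j) (df j) (y j t) * yp j t)); first by [].
apply: (Dw_comp (B := I01) (RHI j)); first exact: Hy.
by apply: Dh; [exact: Hdf| exact: yr].
Qed.

Lemma CU t : 0 <= t -> Cw RH U t.
Proof. by move=> t0; apply: Cw_of_Dw (DU t0). Qed.
Lemma Cx i t : 0 <= t -> Cw RH (x i) t.
Proof. by move=> t0; apply: Cw_of_Dw (Hx i t0). Qed.
Lemma Cy i t : 0 <= t -> Cw RH (y i) t.
Proof. by move=> t0; apply: Cw_of_Dw (Hy i t0). Qed.
Lemma Ckx i t : 0 <= t -> Cw RH (kx i) t.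
Proof.
move=> t0; apply: Cw_mul; first exact: Cx.
apply: (Cw_comp (B := I01) (RHIx i)); first exact: Cx.
by apply: Hgc; apply: xr.
Qed.
Lemma Ca j t : 0 <= t -> Cw RH (a j) t.
Proof.
move=> t0; apply: (Cw_comp (B := I01) (RHI j)); first exact: Cy.
by apply: Cdh; [exact: Hdf|exact: Hdfc|exact: yr].
Qed.
Lemma Cyp j t : 0 <= t -> Cw RH (yp j) t.
Proof.
move=> t0; apply: Cw_B; first by apply: Cw_mul; [exact: Ckx|exact: CU].
by apply: Cw_scale; exact: Cy.
Qed.
Lemma Cww t : 0 <= t -> Cw RH w t.
Proof.
move=> t0; apply: (Cw_sum _ (F := fun j s => a j s * yp j s)) => j.
by apply: Cw_mul; [exact: Ca|exact: Cyp].
Qed.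
Lemma CP t : 0 <= t -> Cw RH P t.
Proof.
move=> t0; apply: (Cw_sum _ (F := fun j s => a j s * kx j s)) => j.
by apply: Cw_mul; [exact: Ca|exact: Ckx].
Qed.

Lemma a_nonneg j t : 0 <= t -> 0 <= a j t.
Proof. by move=> t0; apply: dh_nonneg; [exact: Hdf|exact: Hinc|exact: Hcc|exact: yr]. Qed.
Lemma a_le j t : 0 <= t -> a j t <= dhh (f j) (df j) 0.
Proof.
move=> t0; apply: dh_mono; [exact: Hdf|exact: Hcc|exact: (I01_0 R)|exact: yr|].
exact: I01_ge0 (yr j t0).
Qed.
Lemma k_le i z : I01 z -> z * g i z <= 1 * g i 1.
Proof.
move=> Iz; have [z1|z1] := ltP z 1.
  have H := Hk i Iz (I01_1 R) z1. rewrite /= in H. exact: ltW H.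
by have -> : z = 1 by have := I01_le1 Iz; lra.
Qed.
Lemma k_nonneg i z : I01 z -> 0 <= z * g i z.
Proof. by move=> Iz; apply: mulr_ge0; [exact: I01_ge0|exact: ltW (Hgpos i Iz)]. Qed.
Lemma k_mono i u v : I01 u -> I01 v -> u <= v -> u * g i u <= v * g i v.
Proof.
move=> Iu Iv uv; have [->|uv'] := eqVneq u v; first exact: lexx.
by apply: ltW; apply: (Hk i) => //; rewrite lt_neqAle uv' uv.
Qed.
Lemma kx_nonneg i t : 0 <= t -> 0 <= kx i t.
Proof. by move=> t0; apply: k_nonneg; apply: xr. Qed.
Lemma kx_le i t : 0 <= t -> kx i t <= 1 * g i 1.
Proof. by move=> t0; apply: k_le; apply: xr. Qed.
Lemma U_nonneg t : 0 <= t -> 0 <= U t.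
Proof.
move=> t0; apply: sumr_ge0 => j _.
exact: (h_nonneg (Hinc j) (yr j t0)).
Qed.
Lemma U_le t : 0 <= t -> U t <= Um.
Proof.
move=> t0; apply: ler_sum => j _.
have Iy := yr j t0.
have [y1|y1] := ltP (y j t) 1; first exact: ltW (Hinc j Iy (I01_1 R) y1).
by have -> : y j t = 1 by have := I01_le1 Iy; lra.
Qed.
Lemma P_nonneg t : 0 <= t -> 0 <= P t.
Proof.
by move=> t0; apply: sumr_ge0 => j _; apply: mulr_ge0; [exact: a_nonneg|exact: kx_nonneg].
Qed.
Lemma P_le t : 0 <= t -> P t <= Pm.
Proof.
move=> t0; apply: ler_sum => j _; apply: ler_pM.
- exact: a_nonneg.
- exact: kx_nonneg.
- exact: a_le.
- exact: kx_le.
Qed.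

Lemma xy_le1 i t : 0 <= t -> x i t + y i t <= 1.
Proof.
move=> t0; apply: le_trans (Hs0 i).
apply: (mono_of_Dw (F := fun s => x i s + y i s)) => // tau /andP [tau0 _].
exists (- (x i tau * g i (x i tau) * ybar f y tau) +
   (x i tau * g i (x i tau) * ybar f y tau - gam * y i tau)).
  by apply: Dw_add; [exact: Hx|exact: Hy].
have := I01_ge0 (yr i tau0).
have : 0 <= gam * y i tau by apply: mulr_ge0; [exact: ltW|exact: I01_ge0 (yr i tau0)].
lra.
Qed.

Lemma ypos t : 0 <= t -> 0 < y j1 t.
Proof.
move=> t0.
have H : (fun s => - (expR (gam * s) * y j1 s)) t <= (fun s => - (expR (gam * s) * y j1 s)) 0.
  apply: (mono_of_Dw (F := fun s => - (expR (gam * s) * y j1 s))) => // tau /andP [tau0 _].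
  eexists; first by apply: Dw_N; apply: Dw_mul; [exact: Dw_exp|exact: Hy].
  set E := expR (gam * tau).
  have E0 : 0 < E by apply: expR_gt0.
  have -> : gam * E * y j1 tau + E * (x j1 tau * g j1 (x j1 tau) * ybar f y tau - gam * y j1 tau)
    = E * (kx j1 tau * U tau) by rewrite /kx /U; ring.
  rewrite oppr_le0; apply: mulr_ge0; first exact: ltW.
  by apply: mulr_ge0; [exact: kx_nonneg|exact: U_nonneg].
move: H => /=; rewrite mulr0 expR0 mul1r lerN2 => H.
have : 0 < expR (gam * t) * y j1 t by apply: lt_le_trans H.
by rewrite pmulr_rgt0 // expR_gt0.
Qed.

Lemma Upos t : 0 <= t -> 0 < U t.
Proof.
move=> t0; rewrite /U /ybar (bigD1 j1) //=.
have A := h_pos (Hinc j1) (yr j1 t0) (ypos t0).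
have B : 0 <= \sum_(j < n | j != j1) f j (y j t) * y j t.
  by apply: sumr_ge0 => j _; exact: (h_nonneg (Hinc j) (yr j t0)).
rewrite /hh in A; lra.
Qed.

Lemma xpos t : 0 <= t -> 0 < x j0 t.
Proof.
move=> t0.
set K := Gb * Um.
have H : (fun s => - (expR (K * s) * x j0 s)) t <= (fun s => - (expR (K * s) * x j0 s)) 0.
  apply: (mono_of_Dw (F := fun s => - (expR (K * s) * x j0 s))) => // tau /andP [tau0 _].
  eexists; first by apply: Dw_N; apply: Dw_mul; [exact: Dw_exp|exact: Hx].
  set E := expR (K * tau).
  have E0 : 0 < E by apply: expR_gt0.
  have -> : K * E * x j0 tau + E * - (x j0 tau * g j0 (x j0 tau) * ybar f y tau)
    = E * x j0 tau * (K - g j0 (x j0 tau) * U tau) by rewrite /U; ring.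
  rewrite oppr_le0; apply: mulr_ge0.
    by apply: mulr_ge0; [exact: ltW|exact: I01_ge0 (xr j0 tau0)].
  rewrite subr_ge0 /K; apply: ler_pM.
  - exact: ltW (Hgpos j0 (xr j0 tau0)).
  - exact: U_nonneg.
  - exact: HGb (xr j0 tau0).
  - exact: U_le.
move: H => /=; rewrite mulr0 expR0 mul1r lerN2 => H.
have : 0 < expR (K * t) * x j0 t by apply: lt_le_trans H.
by rewrite pmulr_rgt0 // expR_gt0.
Qed.

Lemma x_noninc i s t : 0 <= s -> s <= t -> x i t <= x i s.
Proof.
move=> s0 st; apply: (mono_of_Dw (F := x i)) => // tau /andP [tau0 _].
have tau0' : 0 <= tau by apply: le_trans tau0.
exists (- (x i tau * g i (x i tau) * ybar f y tau)); first exact: Hx.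
rewrite oppr_le0; apply: mulr_ge0; first exact: kx_nonneg.
exact: U_nonneg.
Qed.

Lemma kx_noninc i s t : 0 <= s -> s <= t -> kx i t <= kx i s.
Proof.
move=> s0 st; apply: k_mono; [apply: xr; exact: le_trans st|exact: xr|exact: x_noninc].
Qed.

Lemma x_strict s t : 0 <= s -> s < t -> x j0 t < x j0 s.
Proof.
move=> s0 st; apply: (mono_strict_of_Dw s0 st _ (Hx j0 s0)).
  move=> tau /andP [tau0 _].
  have tau0' : 0 <= tau by apply: le_trans tau0.
  exists (- (x j0 tau * g j0 (x j0 tau) * ybar f y tau)); first exact: Hx.
  rewrite oppr_le0; apply: mulr_ge0; first exact: kx_nonneg.
  exact: U_nonneg.
rewrite oppr_lt0; apply: mulr_gt0; last exact: Upos.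
by apply: mulr_gt0; [exact: xpos|exact: Hgpos (xr j0 s0)].
Qed.

Lemma kx_strict s t : 0 <= s -> s < t -> kx j0 t < kx j0 s.
Proof.
move=> s0 st; have t0 : 0 <= t by apply: le_trans (ltW st).
exact: (Hk j0 (xr j0 t0) (xr j0 s0) (x_strict s0 st)).
Qed.

Lemma a_j0_pos t : 0 <= t -> 0 < a j0 t.
Proof.
move=> t0; apply: dh_pos; [exact: Hdf|exact: Hinc|exact: Hcc|exact: yr|].
have := xy_le1 j0 t0; have := xpos t0; lra.
Qed.

Definition T j tau s := (a j s - a j tau) * (yp j tau - gam * (y j s - y j tau)).

Lemma T_loU j tau : 0 <= tau -> loU (fun s => tau < s) tau (T j tau).
Proof.
move=> tau0.
have RHs : forall s, tau < s -> RH s by move=> s ts; rewrite /RH; apply: le_trans (ltW ts).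
set c := yp j tau.
have [c0|c0|c0] := ltgtP c 0; last first.
- (* c = 0 *)
  have L := lo_zO (Ca j tau0) (lO_scale (- gam) (lO_of_Dw (Hy j tau0))).
  apply: loU_sub RHs _; apply: loU_of_lo; apply: lo_ext L => s _.
  by rewrite /T -/c c0; ring.
- (* c > 0 *)
  apply: (loU_le (psi := fun _ => 0)); last exact: loU0.
  have e0 : 0 < c / 2 by rewrite divr_gt0.
  have [d1 d10 Hd1] := Hy j tau0 e0.
  have g2 : 0 < 1 / (2 * gam) by rewrite divr_gt0 // mulr_gt0.
  exists (Num.min d1 (1 / (2 * gam))); first exact: minpos.
  move=> s ts st.
  have us : `|s - tau| = s - tau by rewrite gtr0_norm // subr_gt0.
  have st1 := ltminl st; have st2 := ltminr st.
  have := Hd1 s (RHs s ts) st1; rewrite us ler_norml => /andP [H1 H2].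
  rewrite -[x j tau * g j (x j tau) * ybar f y tau - gam * y j tau]/c in H1 H2.
  rewrite us in st2.
  have u0 : 0 < s - tau by rewrite subr_gt0.
  have gu : gam * (s - tau) <= 1 / 2.
    move: st2; rewrite ltr_pdivlMr ?mulr_gt0 // => H; nra.
  move: (s - tau) u0 gu H1 H2 => u u0 gu H1 H2.
  have E1 : c / 2 * u = (c * u) / 2 by ring.
  rewrite E1 in H1 H2.
  have cu : 0 < c * u by rewrite mulr_gt0.
  have dy0 : 0 <= y j s - y j tau by lra.
  have Hdy : y j s - y j tau <= 3 / 2 * (c * u) by lra.
  have G1 : gam * (y j s - y j tau) <= gam * (3 / 2 * (c * u)) by apply: ler_wpM2l => //; exact: ltW.
  have G2 : gam * (3 / 2 * (c * u)) = 3 / 2 * (c * (gam * u)) by ring.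
  have G3 : c * (gam * u) <= c * (1 / 2) by apply: ler_wpM2l => //; exact: ltW.
  have cg : 0 <= c - gam * (y j s - y j tau) by lra.
  have da : a j s - a j tau <= 0.
    rewrite subr_le0; apply: dh_mono; [exact: Hdf|exact: Hcc|exact: yr|apply: yr; exact: (RHs s ts)|lra].
  by rewrite /T -/c; apply: mulr_le0_ge0.
- (* c < 0 *)
  apply: (loU_le (psi := fun _ => 0)); last exact: loU0.
  have e0 : 0 < - c / 2 by rewrite divr_gt0 // oppr_gt0.
  have [d1 d10 Hd1] := Hy j tau0 e0.
  have g2 : 0 < 1 / (2 * gam) by rewrite divr_gt0 // mulr_gt0.
  exists (Num.min d1 (1 / (2 * gam))); first exact: minpos.
  move=> s ts st.
  have us : `|s - tau| = s - tau by rewrite gtr0_norm // subr_gt0.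
  have st1 := ltminl st; have st2 := ltminr st.
  have := Hd1 s (RHs s ts) st1; rewrite us ler_norml => /andP [H1 H2].
  rewrite -[x j tau * g j (x j tau) * ybar f y tau - gam * y j tau]/c in H1 H2.
  rewrite us in st2.
  have u0 : 0 < s - tau by rewrite subr_gt0.
  have gu : gam * (s - tau) <= 1 / 2.
    move: st2; rewrite ltr_pdivlMr ?mulr_gt0 // => H; nra.
  move: (s - tau) u0 gu H1 H2 => u u0 gu H1 H2.
  have E1 : - c / 2 * u = - (c * u) / 2 by ring.
  rewrite E1 in H1 H2.
  have cu : 0 < - (c * u) by rewrite -mulNr mulr_gt0 // oppr_gt0.
  have dy0 : y j s - y j tau <= 0 by lra.
  have Hdy : 3 / 2 * (c * u) <= y j s - y j tau by lra.
  have G1 : gam * (3 / 2 * (c * u)) <= gam * (y j s - y j tau) by apply: ler_wpM2l => //; exact: ltW.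
  have G2 : gam * (3 / 2 * (c * u)) = 3 / 2 * (c * (gam * u)) by ring.
  have G3 : c * (1 / 2) <= c * (gam * u) by apply: ler_wnM2l => //; exact: ltW.
  have cg : c - gam * (y j s - y j tau) <= 0 by lra.
  have da : 0 <= a j s - a j tau.
    rewrite subr_ge0; apply: dh_mono; [exact: Hdf|exact: Hcc|apply: yr; exact: (RHs s ts)|exact: yr|lra].
  by rewrite /T -/c; apply: mulr_ge0_le0.
Qed.

Definition Zt tau s := U tau * \sum_(j < n) a j s * (kx j s - kx j tau).

Lemma ME_pt tau s : 0 <= tau -> tau < s ->
  w s - w tau - w tau * (P tau - gam) * (s - tau) - Zt tau s <=
  \sum_(j < n) T j tau s + (P s - gam) * (U s - U tau - w tau * (s - tau)) +
  (P s - P tau) * (w tau * (s - tau)).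
Proof.
move=> tau0 ts.
have s0 : 0 <= s by apply: le_trans (ltW ts).
have E1 : w s - w tau - Zt tau s =
  \sum_(j < n) (a j s * yp j s - a j tau * yp j tau - U tau * (a j s * (kx j s - kx j tau))).
  by rewrite /Zt /w mulr_sumr -!sumrB.
have E2 : \sum_(j < n) (a j s * yp j s - a j tau * yp j tau - U tau * (a j s * (kx j s - kx j tau))) =
  \sum_(j < n) (T j tau s + (U s - U tau) * (a j s * kx j s) - gam * (a j tau * (y j s - y j tau))).
  by apply: eq_bigr => j _; rewrite /T /yp; ring.
have E3 : \sum_(j < n) (T j tau s + (U s - U tau) * (a j s * kx j s) - gam * (a j tau * (y j s - y j tau))) =
  \sum_(j < n) T j tau s + (U s - U tau) * P s - gam * \sum_(j < n) a j tau * (y j s - y j tau).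
  by rewrite /P; move: (U s - U tau) => dU; rewrite !mulr_sumr -big_split -sumrB.
have C : U s - U tau <= \sum_(j < n) a j tau * (y j s - y j tau).
  rewrite /U /ybar -sumrB; apply: ler_sum => j _.
  have := tangent (Hdf j) (Hcc j) (yr j tau0) (yr j s0); rewrite /hh /a; lra.
have C' : gam * (U s - U tau) <= gam * \sum_(j < n) a j tau * (y j s - y j tau).
  by apply: ler_wpM2l => //; exact: ltW.
have E4 : (P s - gam) * (U s - U tau - w tau * (s - tau)) + (P s - P tau) * (w tau * (s - tau)) =
  (U s - U tau) * P s - gam * (U s - U tau) - w tau * (P tau - gam) * (s - tau) by ring.
move: E1; rewrite E2 E3 => E1.
have -> : w s - w tau - w tau * (P tau - gam) * (s - tau) - Zt tau s =
  (w s - w tau - Zt tau s) - w tau * (P tau - gam) * (s - tau) by ring.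
rewrite E1; lra.
Qed.

Lemma ME tau : 0 <= tau -> loU (fun s => tau < s) tau
  (fun s => w s - w tau - w tau * (P tau - gam) * (s - tau) - Zt tau s).
Proof.
move=> tau0.
have RHs : forall s, tau < s -> RH s by move=> s ts; rewrite /RH; apply: le_trans (ltW ts).
apply: loU_le.
  by exists 1 => // s ts _; apply: ME_pt.
apply: loU_add; first apply: loU_add.
- by apply: (loU_sum _ (phi := fun j s => T j tau s)) => j; apply: T_loU.
- apply: loU_sub RHs _; apply: loU_of_lo; apply: lo_mulb; last exact: DU.
  by apply: lb_add; [apply: lb_near; exact: CP|exact: lb_const].
- apply: loU_sub RHs _; apply: loU_of_lo; apply: lo_zO; first exact: CP.
  exact: lO_lin.
Qed.

Definition V c s := w s * expR (c * s).

Lemma CV c t : 0 <= t -> Cw RH (V c) t.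
Proof. by move=> t0; apply: Cw_mul; [exact: Cww|exact: Cw_of_Dw (Dw_exp _ _ c)]. Qed.

Lemma MEV c tau : 0 <= tau -> loU (fun s => tau < s) tau
  (fun s => V c s - V c tau - expR (c * tau) * w tau * (P tau - gam + c) * (s - tau)
            - expR (c * s) * Zt tau s).
Proof.
move=> tau0.
have RHs : forall s, tau < s -> RH s by move=> s ts; rewrite /RH; apply: le_trans (ltW ts).
have DE := Dw_exp RH tau c.
have L1 : loU (fun s => tau < s) tau (fun s => expR (c * s) *
    (w s - w tau - w tau * (P tau - gam) * (s - tau) - Zt tau s)).
  apply: (loU_mulpos (psi := fun s => expR (c * s))); last exact: ME.
  + apply: lb_near; apply: lz_sub (Cw_of_Dw DE) => s ts; exact: RHs.
  + by move=> s _; apply: ltW; apply: expR_gt0.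
have L2 : loU (fun s => tau < s) tau (fun s => (expR (c * s) - expR (c * tau)) *
    (w tau * (P tau - gam) * (s - tau))).
  apply: loU_of_lo; apply: lo_zO; first by apply: lz_sub (Cw_of_Dw DE) => s ts; exact: RHs.
  exact: (lO_lin _ _ (w tau * (P tau - gam))).
have L3 : loU (fun s => tau < s) tau (fun s => w tau *
    (expR (c * s) - expR (c * tau) - c * expR (c * tau) * (s - tau))).
  apply: loU_of_lo; apply: (lo_scale (w tau)).
  by apply: lo_sub DE => s ts; exact: RHs.
apply: loU_le (loU_add (loU_add L1 L2) L3).
exists 1 => // s ts _.
rewrite /V /=.
suff -> : w s * expR (c * s) - w tau * expR (c * tau) -
    expR (c * tau) * w tau * (P tau - gam + c) * (s - tau) - expR (c * s) * Zt tau s =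
  expR (c * s) * (w s - w tau - w tau * (P tau - gam) * (s - tau) - Zt tau s) +
  (expR (c * s) - expR (c * tau)) * (w tau * (P tau - gam) * (s - tau)) +
  w tau * (expR (c * s) - expR (c * tau) - c * expR (c * tau) * (s - tau)) by [].
ring.
Qed.

Lemma Zt_le0 tau s : 0 <= tau -> tau <= s -> Zt tau s <= 0.
Proof.
move=> tau0 ts; have s0 : 0 <= s by apply: le_trans ts.
rewrite /Zt; apply: mulr_ge0_le0; first exact: U_nonneg.
apply: sumr_le0 => j _; apply: mulr_ge0_le0; first exact: a_nonneg.
by rewrite subr_le0; apply: kx_noninc.
Qed.

Lemma V_loU c tau : 0 <= tau -> expR (c * tau) * w tau * (P tau - gam + c) <= 0 ->
  loU (fun s => tau < s) tau (fun s => V c s - V c tau).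
Proof.
move=> tau0 H; apply: loU_le (MEV c tau0); exists 1 => // s ts _.
have : expR (c * tau) * w tau * (P tau - gam + c) * (s - tau) <= 0.
  by apply: mulr_le0_ge0 => //; rewrite subr_ge0 ltW.
have : expR (c * s) * Zt tau s <= 0.
  apply: mulr_ge0_le0; first exact: ltW (expR_gt0 _).
  by apply: Zt_le0 => //; apply: ltW.
lra.
Qed.

Lemma claimA1 t0 : 0 <= t0 -> w t0 <= 0 -> forall t, t0 <= t -> w t <= 0.
Proof.
move=> t00 wt0 t1 t01; rewrite leNgt; apply/negP => w1.
have t01' : t0 < t1.
  rewrite lt_neqAle t01 andbT; apply/negP => /eqP E; rewrite -E in w1; lra.
set S := [set s | t0 <= s <= t1 /\ w s <= 0].
have St0 : S t0 by split => //; rewrite lexx t01.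
have hS : has_sup S.
  by split; [exists t0 | exists t1 => s [/andP [_ ->]]].
set c := sup S.
have c1 : t0 <= c by apply: (sup_upper_bound hS).
have c2 : c <= t1.
  rewrite leNgt; apply/negP => bc.
  have bc0 : 0 < c - t1 by rewrite subr_gt0.
  have [s [/andP [_ sb] _] cs] := sup_adherent bc0 hS.
  rewrite -/c in cs; lra.
have c0 : 0 <= c by apply: le_trans c1.
have wc : w c <= 0.
  rewrite leNgt; apply/negP => wc.
  have e0 : 0 < w c / 2 by rewrite divr_gt0.
  have [d d0 Hd] := Cww c0 e0.
  have [s [/andP [s1 s2] ws] cs] := sup_adherent d0 hS.
  rewrite -/c in cs.
  have sc : s <= c by apply: (sup_upper_bound hS); split => //; rewrite s1 s2.
  have s0 : 0 <= s by apply: le_trans s1.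
  have := Hd s s0; rewrite ler_distlC => H.
  have : `|s - c| < d by rewrite ltr_distlC; apply/andP; split; lra.
  move=> /H /andP [_ H2]; lra.
have ct1 : c < t1 by rewrite lt_neqAle c2 andbT; apply/negP => /eqP E; rewrite E in wc; lra.
have wc0 : w c = 0.
  apply/eqP; rewrite eq_le wc /=; rewrite leNgt; apply/negP => wc'.
  have e0 : 0 < - w c / 2 by rewrite divr_gt0 // oppr_gt0.
  have [d d0 Hd] := Cww c0 e0.
  set s := c + Num.min d (t1 - c) / 2.
  have m0 : 0 < Num.min d (t1 - c) by apply: minpos => //; rewrite subr_gt0.
  have m1 : Num.min d (t1 - c) <= d by rewrite ge_min lexx.
  have m2 : Num.min d (t1 - c) <= t1 - c by rewrite ge_min lexx orbT.
  have s0 : 0 <= s by rewrite /s; apply: addr_ge0 => //; rewrite divr_ge0 // ltW.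
  have := Hd s s0; rewrite ler_distlC => H.
  have : `|s - c| < d by rewrite ltr_distlC; apply/andP; split; rewrite /s; lra.
  move=> /H /andP [H2 _].
  have Ss : S s by split; [apply/andP; split; rewrite /s; lra | lra].
  have : s <= c by apply: (sup_upper_bound hS).
  rewrite /s; lra.
have wpos : forall s, c < s -> s <= t1 -> 0 < w s.
  move=> s cs st; rewrite ltNge; apply/negP => ws.
  have Ss : S s by split => //; apply/andP; split => //; apply: le_trans c1 (ltW cs).
  have : s <= c by apply: (sup_upper_bound hS).
  lra.
have HV : V (- Pm) t1 <= V (- Pm) c.
  apply: (GMRH c0 c2); first by move=> tau /andP [h1 _]; apply: CV; exact: le_trans c0 h1.
  move=> tau /andP [h1 h2].
  have tau0 : 0 <= tau by apply: le_trans c0 h1.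
  apply: V_loU => //.
  have wt : 0 <= w tau.
    have [->|ne] := eqVneq tau c; first by rewrite wc0.
    by apply: ltW; apply: wpos; [rewrite lt_neqAle eq_sym ne h1| exact: ltW].
  apply: mulr_ge0_le0; first by apply: mulr_ge0 => //; exact: ltW (expR_gt0 _).
  move: (P_le tau0) gam0; move: (P tau) Pm gam => p q r; lra.
move: HV; rewrite /V wc0 mul0r => HV.
have : 0 < w t1 * expR (- Pm * t1) by apply: mulr_gt0 => //; exact: expR_gt0.
lra.
Qed.

Lemma claimA t0 : 0 <= t0 -> w t0 <= 0 -> forall t, t0 < t -> w t < 0.
Proof.
move=> t00 wt0 t tt; rewrite ltNge; apply/negP => wt.
have A1 := claimA1 t00 wt0.
have wt' : w t = 0 by apply/eqP; rewrite eq_le wt A1 // ltW.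
have t0' : 0 <= t by apply: le_trans (ltW tt).
have Vmono : forall s1 s2, t0 <= s1 -> s1 <= s2 -> V gam s2 <= V gam s1.
  move=> s1 s2 h1 h2; apply: (GMRH (le_trans t00 h1) h2).
    move=> tau /andP [h3 _]; apply: CV; apply: le_trans t00 (le_trans h1 h3).
  move=> tau /andP [h3 _].
  have tau0 : t0 <= tau by apply: le_trans h1 h3.
  apply: V_loU; first exact: le_trans tau0.
  have -> : P tau - gam + gam = P tau by ring.
  apply: mulr_le0_ge0; last by apply: P_nonneg; exact: le_trans tau0.
  apply: mulr_ge0_le0; first exact: ltW (expR_gt0 _).
  exact: A1.
have w0 : forall s, t0 <= s -> s <= t -> w s = 0.
  move=> s h1 h2; apply/eqP; rewrite eq_le A1 //=.
  have := Vmono s t h1 h2; rewrite /V wt' mul0r => H.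
  have E0 : 0 < expR (gam * s) by apply: expR_gt0.
  by rewrite -(pmulr_lge0 _ E0).
have K : kx j0 t0 <= kx j0 t.
  rewrite -lerN2.
  apply: (GMRH (F := fun s => - kx j0 s) t00 (ltW tt)).
    by move=> tau /andP [h1 _]; apply: Cw_N; apply: Ckx; apply: le_trans t00 h1.
  move=> tau /andP [h1 h2].
  have tau0 : 0 <= tau by apply: le_trans t00 h1.
  have U0 := Upos tau0.
  have a0 := a_j0_pos tau0.
  set K := 2 / (U tau * a j0 tau).
  have K0 : 0 <= K by rewrite divr_ge0 // ltW // mulr_gt0.
  have L := loU_mulpos (lb_const _ tau K) (fun _ _ => K0) (ME tau0).
  apply: loU_le L.
  have e0 : 0 < a j0 tau / 2 by rewrite divr_gt0.
  have [d d0 Hd] := Ca j0 tau0 e0.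
  exists (Num.min d (t - tau)); first by apply: minpos => //; rewrite subr_gt0.
  move=> s ts st.
  have s0 : 0 <= s by apply: le_trans (ltW ts).
  have st1 := ltminl st; have st2 := ltminr st.
  have sle : s <= t by move: st2; rewrite gtr0_norm ?subr_gt0 //; lra.
  have ws : w s = 0 by apply: w0 => //; apply: le_trans h1 (ltW ts).
  have wtau : w tau = 0 by apply: w0 => //; apply: ltW.
  rewrite ws wtau /=.
  have := Hd s s0 st1; rewrite ler_distlC => /andP [_ Ha].
  have kxd : 0 <= kx j0 tau - kx j0 s by rewrite subr_ge0 kx_noninc // ltW.
  have Zb : - Zt tau s >= U tau * (a j0 s * (kx j0 tau - kx j0 s)).
    have EZ : - Zt tau s = U tau * \sum_(i < n) - (a i s * (kx i s - kx i tau)).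
      by rewrite /Zt sumrN mulrN.
    rewrite EZ (bigD1 j0) //= mulrDr.
    have : 0 <= U tau * \sum_(i < n | i != j0) - (a i s * (kx i s - kx i tau)).
      apply: mulr_ge0; first exact: ltW.
      apply: sumr_ge0 => i _; rewrite -mulrN; apply: mulr_ge0; first exact: a_nonneg.
      by rewrite oppr_ge0 subr_le0 kx_noninc // ltW.
    have -> : - (a j0 s * (kx j0 s - kx j0 tau)) = a j0 s * (kx j0 tau - kx j0 s) by ring.
    lra.
  have Zb2 : U tau * (a j0 s * (kx j0 tau - kx j0 s)) >=
             U tau * (a j0 tau / 2 * (kx j0 tau - kx j0 s)).
    apply: ler_wpM2l; first exact: ltW.
    by apply: ler_wpM2r => //; lra.
  have KE : K * (U tau * (a j0 tau / 2 * (kx j0 tau - kx j0 s))) = kx j0 tau - kx j0 s.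
    by rewrite /K; field; rewrite !gt_eqF.
  have : K * (U tau * (a j0 tau / 2 * (kx j0 tau - kx j0 s))) <= K * (- Zt tau s).
    apply: ler_wpM2l => //; lra.
  rewrite KE.
  have -> : 0 - 0 - 0 * (P tau - gam) * (s - tau) - Zt tau s = - Zt tau s by ring.
  lra.
have := kx_strict t00 tt; lra.
Qed.

Lemma claimB : 0 < w 0 -> exists2 t, 0 <= t & w t <= 0.
Proof.
move=> w0; case: (pselect (exists2 t, 0 <= t & w t <= 0)) => // H; exfalso.
have wpos : forall t, 0 <= t -> 0 < w t.
  by move=> t t0; rewrite ltNge; apply/negP => wt; apply: H; exists t.
have Umono : forall t, 0 <= t -> U 0 <= U t.
  move=> t t0; rewrite -lerN2.
  apply: (mono_of_Dw (F := fun s => - U s)) => // tau /andP [tau0 _].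
  exists (- w tau); first by apply: Dw_N; apply: DU.
  by rewrite oppr_le0 ltW // wpos.
set cc := fun j : 'I_n => dhh (f j) (df j) 0.
set D := \sum_(j < n) cc j.
set U0 := U 0.
have U00 : 0 < U0 by apply: Upos.
set S := fun s => \sum_(j < n) cc j * (x j s + y j s).
have Sb : forall s, 0 <= s -> 0 <= S s.
  move=> s s0; apply: sumr_ge0 => j _; apply: mulr_ge0.
    by rewrite /cc; apply: (dh_nonneg (Hdf j) (Hinc j) (Hcc j)); exact: I01_0.
  by apply: addr_ge0; [exact: I01_ge0 (xr j s0)|exact: I01_ge0 (yr j s0)].
have S0 : S 0 <= D.
  apply: ler_sum => j _; rewrite -[X in _ <= X]mulr1; apply: ler_wpM2l; last exact: Hs0.
  by rewrite /cc; apply: (dh_nonneg (Hdf j) (Hinc j) (Hcc j)); exact: I01_0.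
set T1 := D / (gam * U0) + 1.
have gU : 0 < gam * U0 by apply: mulr_gt0.
have D0 : 0 <= D by apply: le_trans (Sb 0 (lexx 0)) S0.
have T10 : 0 <= T1 by rewrite /T1 addr_ge0 // divr_ge0 // ltW.
have HF : (fun s => S s + gam * U0 * s) T1 <= (fun s => S s + gam * U0 * s) 0.
  apply: (mono_of_Dw (F := fun s => S s + gam * U0 * s)) => // tau /andP [tau0 _].
  eexists.
    apply: Dw_add; last by apply: (Dw_scale (gam * U0)); exact: Dw_id.
    apply: (Dw_sum _ (F := fun j s => cc j * (x j s + y j s))) => j.
    by apply: Dw_scale; apply: Dw_add; [exact: Hx|exact: Hy].
  rewrite mulr1.
  have E : \sum_(j < n) cc j * (- (x j tau * g j (x j tau) * ybar f y tau) +
     (x j tau * g j (x j tau) * ybar f y tau - gam * y j tau)) =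
     - (gam * \sum_(j < n) cc j * y j tau).
    by rewrite mulr_sumr -sumrN; apply: eq_bigr => j _; ring.
  rewrite E.
  have : U tau <= \sum_(j < n) cc j * y j tau.
    by apply: ler_sum => j _; apply: (h_le_lin (Hdf j) (Hcc j) (yr j tau0)).
  have := Umono tau tau0.
  move=> h1 h2.
  have : gam * U tau <= gam * \sum_(j < n) cc j * y j tau by apply: ler_wpM2l => //; exact: ltW.
  have : gam * U0 <= gam * U tau by apply: ler_wpM2l => //; exact: ltW.
  lra.
move: HF => /=; rewrite mulr0 addr0 => HF.
have gU' : gam * U0 != 0 by rewrite gt_eqF.
have : gam * U0 * T1 = D + gam * U0 by rewrite /T1 mulrDr mulr1 [gam * U0 * _]mulrC divfK.
have := Sb T1 T10.
lra.
Qed.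

Lemma dec t0 : 0 <= t0 -> w t0 <= 0 -> forall s t, t0 <= s -> s < t -> U t < U s.
Proof.
move=> t00 wt0 s t ts st.
have s0 : 0 <= s by apply: le_trans ts.
set m := (s + t) / 2.
have sm : s < m by rewrite /m; lra.
have mt : m < t by rewrite /m; lra.
have m0 : 0 <= m by apply: le_trans s0 (ltW sm).
have A1 : U m <= U s.
  apply: (mono_of_Dw' s0 (ltW sm)) => tau /andP [h1 _].
  have tau0 : 0 <= tau by apply: le_trans s0 h1.
  exists (w tau); first exact: DU.
  by move=> _; apply: (claimA1 t00 wt0); apply: le_trans ts h1.
have A2 : U t < U m.
  apply: (mono_strict_of_Dw' m0 mt _ (DU m0)).
    move=> tau /andP [h1 _].
    have tau0 : 0 <= tau by apply: le_trans m0 h1.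
    exists (w tau); first exact: DU.
    by move=> _; apply: (claimA1 t00 wt0); apply: le_trans ts (le_trans (ltW sm) h1).
  by apply: (claimA t00 wt0); apply: le_lt_trans ts sm.
exact: lt_le_trans A2 A1.
Qed.

Lemma final d : Dw RH U 0 d ->
  (d <= 0 -> forall s t, 0 <= s -> s < t -> U t < U s) /\
  (0 < d -> exists th, 0 < th /\
     (forall s t, 0 <= s -> s < t -> t <= th -> U s < U t) /\
     (forall s t, th <= s -> s < t -> U t < U s)).
Proof.
move=> Hd.
have dw : d = w 0 := Dw_unique (lexx 0) Hd (DU (lexx 0)).
split; first by move=> d0; apply: dec (lexx 0) _; rewrite -dw.
move=> d0; have w0 : 0 < w 0 by rewrite -dw.
have [t1 t10 wt1] := claimB w0.
set S := [set tau | 0 <= tau /\ forall sg, 0 <= sg <= tau -> 0 < w sg].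
have S0 : S 0.
  split => // sg /andP [h1 h2]; have -> : sg = 0 by lra.
  exact: w0.
have hS : has_sup S.
  split; first by exists 0.
  exists t1 => tau [tau0 H]; rewrite leNgt; apply/negP => tt1.
  have := H t1; rewrite t10 (ltW tt1) => /(_ isT); lra.
set th := sup S.
have wpos : forall sg, 0 <= sg -> sg < th -> 0 < w sg.
  move=> sg sg0 sgt.
  have e0 : 0 < th - sg by rewrite subr_gt0.
  have [tau [tau0 Htau] ttau] := sup_adherent e0 hS.
  rewrite -/th in ttau.
  by apply: Htau; rewrite sg0 /=; lra.
have th0 : 0 < th.
  have e0 : 0 < w 0 / 2 by rewrite divr_gt0.
  have [del del0 Hdl] := Cww (lexx 0) e0.
  have Sd : S (del / 2).
    split; first by rewrite divr_ge0 // ltW.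
    move=> sg /andP [h1 h2].
    have := Hdl sg h1; rewrite ler_distlC => H.
    have : `|sg - 0| < del by rewrite subr0 ger0_norm //; lra.
    move=> /H /andP [_ H2]; lra.
  have : del / 2 <= th by apply: (sup_upper_bound hS).
  have : 0 < del / 2 by rewrite divr_gt0.
  lra.
have wth : w th <= 0.
  rewrite leNgt; apply/negP => wt.
  have e0 : 0 < w th / 2 by rewrite divr_gt0.
  have [del del0 Hdl] := Cww (ltW th0) e0.
  have Sd : S (th + del / 2).
    split; first by apply: addr_ge0; [exact: ltW|rewrite divr_ge0 // ltW].
    move=> sg /andP [h1 h2].
    have [sgt|sgt] := ltP sg th; first exact: wpos.
    have := Hdl sg h1; rewrite ler_distlC => H.
    have : `|sg - th| < del by rewrite ger0_norm ?subr_ge0 //; lra.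
    move=> /H /andP [_ H2]; lra.
  have : th + del / 2 <= th by apply: (sup_upper_bound hS).
  have : 0 < del / 2 by rewrite divr_gt0.
  lra.
exists th; split => //; split.
- move=> s t s0 st tth.
  rewrite -ltrN2.
  apply: (mono_strict_of_Dw' (F := fun s => - U s) s0 st _ (Dw_N (DU s0))).
    move=> tau /andP [h1 h2].
    have tau0 : 0 <= tau by apply: le_trans s0 h1.
    exists (- w tau); first exact: (Dw_N (DU tau0)).
    by move=> taut; rewrite oppr_le0 ltW // wpos //; apply: lt_le_trans taut tth.
  by rewrite oppr_lt0; apply: wpos => //; apply: lt_le_trans st tth.
- by move=> s t ths st; apply: dec (ltW th0) wth s t ths st.
Qed.

End Sol.

End Aux.
Import Aux.
Unset Implicit Arguments.


Theorem theorem2 (R : realType) (n : nat) (gamma : R)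
  (g f : 'I_n -> R -> R) (x y : 'I_n -> R -> R) :
  (0 < n)%N -> 0 < gamma ->
  (forall i, C1_on01 (g i)) -> (forall j, C1_on01 (f j)) ->
  (forall i z, I01 z -> 0 <= g i z) -> (forall j z, I01 z -> 0 <= f j z) ->
  (forall xx yy : 'I_n -> R, inS xx yy ->
     forall i, 0 < g i (xx i) /\ 0 < f i (yy i)) ->
  (forall i, strictly_incr_on01 (fun z => z * g i z)) ->
  (forall j, strictly_incr_on01 (fun z => f j z * z)) ->
  (forall j, concave_on01 (fun z => f j z * z)) ->
  (* the solution stays in the domain [0,1]^{2n} of the vector field *)
  (forall i t, 0 <= t -> I01 (x i t) /\ I01 (y i t)) ->
  (* the ODE on [0, +oo) (right derivative at t = 0) *)
  (forall i t, 0 <= t ->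
     deriv_within Rplus_half (x i) t
       (- (x i t * g i (x i t) * ybar f y t))) ->
  (forall i t, 0 <= t ->
     deriv_within Rplus_half (y i) t
       (x i t * g i (x i t) * ybar f y t - gamma * y i t)) ->
  (* initial condition *)
  inS (fun i => x i 0) (fun i => y i 0) ->
  vlne (fun _ => 0) (fun i => x i 0) ->
  vle (fun i => x i 0) (fun i => 1 - y i 0) ->
  vlne (fun i => 1 - y i 0) (fun _ => 1) ->
  forall d, deriv_within Rplus_half (ybar f y) 0 d ->
  (d <= 0 -> forall s t, 0 <= s -> s < t -> ybar f y t < ybar f y s) /\
  (0 < d -> exists th, 0 < th /\
     (forall s t, 0 <= s -> s < t -> t <= th -> ybar f y s < ybar f y t) /\
     (forall s t, th <= s -> s < t -> ybar f y t < ybar f y s)).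
Proof.
move=> n0 gam0 Cg Cf g0 f0 Hpos Hk Hh Hcc Hr Hx Hy HS Hv0 Hle Hv1 d Hd.
have [df Hdf] := choice Cf.
have [dg Hdg] := choice Cg.
have Hdf' : forall j z, I01 z -> Dw I01 (f j) z (df j z).
  by move=> j z Iz; apply: Dw_of_deriv; apply: (proj2 (Hdf j)).
have Hdfc : forall j z, I01 z -> Cw I01 (df j) z.
  by move=> j z Iz; apply: Cw_of_within (proj1 (Hdf j)) Iz.
have Hgc : forall i z, I01 z -> Cw I01 (g i) z.
  by move=> i z Iz; apply: Cw_of_Dw; apply: Dw_of_deriv; apply: (proj2 (Hdg i)).
have Hgpos : forall i z, I01 z -> 0 < g i z.
  move=> i z Iz.
  have Hin : inS (fun _ : 'I_n => z) (fun _ => 0).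
    move=> k; move: Iz; rewrite /I01 /= => /andP [z0 z1].
    by split; rewrite ?z0 ?z1 ?lexx ?ler01 ?addr0.
  exact: (proj1 (Hpos _ _ Hin i)).
have HM : forall i, exists M, forall z, I01 z -> g i z <= M.
  move=> i.
  have Hc : {within `[(0:R), 1], continuous (g i)}.
    apply: within_of_Cw => z Hz.
    have Iz : I01 z by move: Hz; rewrite /= in_itv.
    apply: Cw_sub (Hgc i z Iz) => s; rewrite /= in_itv //.
  have [c Hc1 Hc2] := EVT_max ler01 Hc.
  exists (g i c) => z Iz; apply: Hc2; rewrite in_itv; exact: Iz.
have [M HMi] := choice HM.
set Gb := \sum_(i < n) `|M i|.
have HGb : forall i z, I01 z -> g i z <= Gb.
  move=> i z Iz; apply: le_trans (HMi i z Iz) _.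
  apply: le_trans (ler_norm _) _.
  rewrite /Gb (bigD1 i) //=; rewrite lerDl; apply: sumr_ge0 => k _; exact: normr_ge0.
have [_ [j0 Hj0]] := Hv0.
have [_ [j1 Hj1']] := Hv1.
have Hj1 : 0 < y j1 0 by move: Hj1'; rewrite /=; lra.
have Hs0 : forall i, x i 0 + y i 0 <= 1 by move=> i; have [_ _ ->] := HS i.
have sub : forall s : R, RH s -> Rplus_half s by [].
have Hx' : forall i t, 0 <= t -> Dw RH (x i) t (- (x i t * g i (x i t) * ybar f y t)).
  by move=> i t t0; apply: Dw_sub sub _; apply: Dw_of_deriv; apply: Hx.
have Hy' : forall i t, 0 <= t ->
    Dw RH (y i) t (x i t * g i (x i t) * ybar f y t - gamma * y i t).
  by move=> i t t0; apply: Dw_sub sub _; apply: Dw_of_deriv; apply: Hy.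
have Hd' : Dw RH (U f y) 0 d by apply: Dw_sub sub _; apply: Dw_of_deriv; exact: Hd.
exact: (final gam0 Hdf' Hdfc Hgc Hgpos Hk Hh Hcc Hr Hx' Hy' Hs0 Hj0 Hj1 HGb Hd').
Qed.
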